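(* Let $G$ be a simple graph with $\min\{\delta(G),\delta(G^c)\}\ge4$ and $|V(G)|\ge 26$. If $G$ has an edge-cut of size at most $3$, then $G^c\in\mathcal{S}_3$.
   Context: $G^c$ is the complement of $G$. $G\in\mathcal{S}_3$ means: for every $\beta:V(G)\to\mathbb{Z}_3$ with $\sum_v\beta(v)\equiv0\pmod3$ there is a strongly-connected orientation $D$ of $G$ with $d^+_D(v)-d^-_D(v)\equiv\beta(v)\pmod3$ for all $v$. *)

(* Defs.v *)
From HB Require Import structures.
From mathcomp Require Import all_boot all_order all_algebra.
Set Implicit Arguments. Unset Strict Implicit. Unset Printing Implicit Defensive.
Import GRing.Theory.
Local Open Scope ring_scope.

Definition simple_graph (V : finType) (e : rel V) : Prop :=
  symmetric e /\ irreflexive e.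

Definition compl_graph (V : finType) (e : rel V) : rel V :=
  fun u v => (u != v) && ~~ e u v.

Definition degree (V : finType) (e : rel V) (v : V) : nat := #|[set w | e v w]|.

Definition min_degree_ge (V : finType) (e : rel V) (k : nat) : Prop :=
  forall v : V, (k <= degree e v)%N.

Definition cut_size (V : finType) (e : rel V) (S : {set V}) : nat :=
  #|[set p : V * V | (p.1 \in S) && (p.2 \notin S) && e p.1 p.2]|.

Definition has_edge_cut_le (V : finType) (e : rel V) (k : nat) : Prop :=
  exists S : {set V}, [/\ S != set0, S != setT & (cut_size e S <= k)%N].

Definition is_orientation (V : finType) (e : rel V) (D : rel V) : Prop :=
  (forall u v, D u v -> e u v) /\ (forall u v, e u v -> D u v (+) D v u).

Definition strongly_connected (V : finType) (D : rel V) : Prop :=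
  forall u v : V, connect D u v.

Definition outdeg (V : finType) (D : rel V) (v : V) : nat := #|[set w | D v w]|.
Definition indeg (V : finType) (D : rel V) (v : V) : nat := #|[set w | D w v]|.

Definition in_S3 (V : finType) (e : rel V) : Prop :=
  forall beta : V -> 'Z_3, \sum_(v : V) beta v = 0 ->
    exists D : rel V, [/\ is_orientation e D, strongly_connected D &
      forall v : V, ((outdeg D v)%:R - (indeg D v)%:R : 'Z_3) = beta v].

(* Main.v *)
Require Import Defs.
From HB Require Import structures.
From mathcomp Require Import all_boot all_order all_algebra.
From mathcomp Require Import ring zify.

Section Part0.
Set Implicit Arguments. Unset Strict Implicit. Unset Printing Implicit Defensive.
Import GRing.Theory.
Local Open Scope ring_scope.

Lemma Z3_cases (x : 'Z_3) : [\/ x = 0, x = 1 | x = 2%:R].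
Proof. case: x => [[|[|[|m]]] Hm].
- by constructor 1; apply: val_inj.
- by constructor 2; apply: val_inj.
- by constructor 3; apply: val_inj.
- by [].
Qed.

Lemma Z3_eq (a b : nat) : (a %% 3 = b %% 3)%N -> (a%:R : 'Z_3) = b%:R.
Proof. by move=> h; apply: val_inj; rewrite /= !val_Zp_nat. Qed.

Lemma Z3_three : (3%:R : 'Z_3) = 0.
Proof. by apply: val_inj. Qed.

Lemma pick_k (n : nat) (b : 'Z_3) : (4 <= n)%N ->
  exists k, [/\ (1 <= k)%N, (k <= 3)%N & (k%:R - (n - k)%:R : 'Z_3) = b].
Proof.
move=> hn.
have key : forall k, (k <= n)%N -> (k%:R - (n - k)%:R : 'Z_3) = (k + k + 2 * n)%N%:R.
  move=> k kn; rewrite natrB // !natrD; apply/eqP; rewrite -subr_eq0.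
  have -> : forall x y : 'Z_3, x - (y - x) - (x + x + (y + (y + 0))) = - (3%:R * y) by move=> x y; ring.
  by rewrite Z3_three mul0r oppr0.
have hb : exists r, (r < 3)%N /\ b = r%:R.
  by case: (Z3_cases b) => ->; [exists 0%N | exists 1%N | exists 2%N].
case: hb => r [hr ->].
pose k := (let t := (2 * (r + n)) %% 3 in if t == 0 then 3 else t)%N.
have hk3 : (k <= 3)%N.
  rewrite /k; case: eqP => // _; apply: ltnW; exact: ltn_pmod.
have hk1 : (1 <= k)%N by rewrite /k; case: eqP => // /eqP; rewrite lt0n.
exists k; split => //; rewrite key; last by apply: leq_trans hk3 (ltnW hn).
apply: Z3_eq; rewrite /k; case: eqP => h; lia.
Qed.


End Part0.

Section Part1.
Set Implicit Arguments. Unset Strict Implicit. Unset Printing Implicit Defensive.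
Import GRing.Theory.
Local Open Scope ring_scope.

Lemma subset_size (V : finType) (A : {set V}) (k : nat) : (k <= #|A|)%N ->
  exists B : {set V}, B \subset A /\ #|B| = k.
Proof.
move=> hk; exists [set x in take k (enum A)]; split.
  by apply/subsetP => x; rewrite inE => /mem_take; rewrite mem_enum.
rewrite cardsE (elimT card_uniqP (take_uniq k (enum_uniq (mem A)))).
rewrite size_take -cardE; case: ltnP => h //; by apply/eqP; rewrite eqn_leq h hk.
Qed.

Lemma sum_ind (V : finType) (A X : {set V}) : X \subset A ->
  \sum_(w in A) ((w \in X)%:R : 'Z_3) = #|X|%:R.
Proof.
move=> sXA; rewrite -sum1_card natr_sum (big_setID X) /= (setIidPr sXA).
rewrite [X in _ + X]big1 ?addr0; last by move=> i; rewrite !inE => /andP[/negPf ->].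
by apply: eq_bigr => i ->.
Qed.

End Part1.

Section Part2.
Set Implicit Arguments. Unset Strict Implicit. Unset Printing Implicit Defensive.
Import GRing.Theory.
Local Open Scope ring_scope.

Definition S3on (V : finType) (e : rel V) (A : {set V}) : Prop :=
  forall beta : V -> 'Z_3, \sum_(v in A) beta v = 0 ->
  exists D : rel V, [/\ forall u w, D u w -> [&& u \in A, w \in A & e u w],
     forall u w, u \in A -> w \in A -> e u w -> D u w (+) D w u,
     forall u w, u \in A -> w \in A -> connect D u w &
     forall v, v \in A -> ((outdeg D v)%:R - (indeg D v)%:R : 'Z_3) = beta v].

Lemma S3on_full (V : finType) (e : rel V) : S3on e setT -> in_S3 e.
Proof.
move=> h beta hb.
have hb' : \sum_(v in [set: V]) beta v = 0 by rewrite -[in RHS]hb; apply: eq_bigl => v; rewrite inE.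
have [D [h1 h2 h3 h4]] := h beta hb'.
exists D; split.
- split; first by move=> u w /h1 /and3P[].
  by move=> u w; apply: h2; rewrite inE.
- by move=> u w; apply: h3; rewrite inE.
- by move=> v; apply: h4; rewrite inE.
Qed.

Lemma card_set1U_notin (V : finType) (x : V) (X : {set V}) : x \notin X ->
  #|x |: X| = (#|X|).+1.
Proof. by move=> h; rewrite cardsU1 h. Qed.

Lemma S3on_add (V : finType) (e : rel V) (A : {set V}) (v : V) :
  symmetric e -> irreflexive e -> S3on e A -> v \notin A ->
  (4 <= #|[set w in A | e v w]|)%N -> S3on e (v |: A).
Proof.
move=> esym eirr hA vA hN beta hsum.
set N := [set w in A | e v w] in hN *.
have sNA : N \subset A by apply/subsetP => w; rewrite inE => /andP[].
have [k [k1 k3 hk]] := pick_k (beta v) hN.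
have [O [sON cO]] : exists O : {set V}, O \subset N /\ #|O| = k.
  by apply: subset_size; apply: leq_trans k3 (ltnW hN).
have sOA : O \subset A := subset_trans sON sNA.
have sNOA : N :\: O \subset A by apply: subset_trans (subsetDl _ _) sNA.
have cNO : #|N :\: O| = (#|N| - k)%N.
  by rewrite cardsD (setIidPr sON) cO.
pose beta' w := beta w - ((w \in N :\: O)%:R : 'Z_3) + (w \in O)%:R.
have hsum' : \sum_(w in A) beta' w = 0.
  rewrite /beta' big_split /= big_split /= sumrN sum_ind // sum_ind // cNO cO.
  move: hsum; rewrite big_setU1 //= => hs.
  by rewrite -[X in _ = X]hs -hk; ring.
have [D [h1 h2 h3 h4]] := hA beta' hsum'.
have DA u w : D u w -> (u \in A) && (w \in A) by move/h1 => /and3P[-> ->].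
have Dv1 w : D v w = false by apply/negP => /DA /andP[]; rewrite (negPf vA).
have Dv2 w : D w v = false by apply/negP => /DA /andP[_]; rewrite (negPf vA).
have vO : v \notin O by apply: contra vA; apply: (subsetP sOA).
have vNO : v \notin N :\: O by apply: contra vA; apply: (subsetP sNOA).
pose D' u w := [|| D u w, (u == v) && (w \in O) | (w == v) && (u \in N :\: O)].
have sub : subrel D D' by move=> u w h; rewrite /D' h.
exists D'; split.
- move=> u w; rewrite /D' => /or3P[/h1/and3P[uA wA euw] | /andP[/eqP -> wO] | /andP[/eqP -> uNO]].
  + by rewrite !in_setU1 uA wA !orbT.
  + have := subsetP sON _ wO; rewrite inE => /andP[wA evw].
    by rewrite !in_setU1 eqxx wA orbT evw.
  + have := subsetP sNOA _ uNO; move: uNO; rewrite !inE => /andP[_ /andP[_ evu]] uA.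
    by rewrite eqxx uA orbT esym evu.
- move=> u w; rewrite !in_setU1 => /orP[/eqP -> | uA] /orP[/eqP -> | wA] euw.
  + by rewrite eirr in euw.
  + rewrite /D' Dv1 Dv2 eqxx /=.
    have wN : w \in N by rewrite inE wA euw.
    rewrite (negPf (_ : w != v)) /=; last by apply: contraNneq vA => <-.
    by rewrite ?orbF in_setD wN andbT; case: (w \in O).
  + rewrite /D' Dv1 Dv2 eqxx /=.
    have uN : u \in N by rewrite inE uA esym euw.
    rewrite (negPf (_ : u != v)) /=; last by apply: contraNneq vA => <-.
    by rewrite ?orbF in_setD uN andbT; case: (u \in O).
  + have uv : u != v by apply: contraNneq vA => <-.
    have wv : w != v by apply: contraNneq vA => <-.
    by rewrite /D' (negPf uv) (negPf wv) !andFb !orbF; apply: h2.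
- have [o oO] : exists o, o \in O.
    by apply/set0Pn; rewrite -card_gt0 cO.
  have [m mNO] : exists m, m \in N :\: O.
    by apply/set0Pn; rewrite -card_gt0 cNO; lia.
  have oA := subsetP sOA _ oO.
  have mA := subsetP sNOA _ mNO.
  have c' : forall x y, x \in A -> y \in A -> connect D' x y.
    by move=> x y xA yA; apply: (connect_sub (e := D)) (h3 _ _ xA yA) => a b /sub /connect1.
  have vo : connect D' v o by apply: connect1; rewrite /D' eqxx oO orbT.
  have mv : connect D' m v by apply: connect1; rewrite /D' eqxx mNO !orbT.
  move=> u w; rewrite !in_setU1 => /orP[/eqP -> | uA] /orP[/eqP -> | wA].
  + exact: connect0.
  + exact: connect_trans vo (c' _ _ oA wA).
  + exact: connect_trans (c' _ _ uA mA) mv.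
  + exact: c'.
- move=> x; rewrite in_setU1 => /orP[/eqP -> | xA].
  + have -> : outdeg D' v = k.
      rewrite /outdeg -cO; apply: eq_card => y; rewrite !inE /D' Dv1 eqxx /=.
      by rewrite (negPf vNO) andbF orbF.
    have -> : indeg D' v = (#|N| - k)%N.
      rewrite /indeg -cNO; apply: eq_card => y; rewrite !inE /D' Dv2 eqxx /=.
      rewrite (negPf vO) andbF /=.
      by rewrite !inE.
    exact: hk.
  + have xv : x != v by apply: contraNneq vA => <-.
    have eo : outdeg D' x = (outdeg D x + (x \in N :\: O))%N.
      rewrite /outdeg; case: (boolP (x \in N :\: O)) => hx.
      * have -> : [set y | D' x y] = v |: [set y | D x y].
          apply/setP => y; rewrite !inE /D' (negPf xv) hx /=. by rewrite andbT orbC.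
        by rewrite cardsU1 inE Dv2 addnC.
      * rewrite addn0; apply: eq_card => y.
        by rewrite !inE /D' (negPf xv) (negPf hx) /= !andbF !orbF.
    have ei : indeg D' x = (indeg D x + (x \in O))%N.
      rewrite /indeg; case: (boolP (x \in O)) => hx.
      * have -> : [set y | D' y x] = v |: [set y | D y x].
          apply/setP => y; rewrite !inE /D' (negPf xv) hx /=. by rewrite andbT orbF orbC.
        by rewrite cardsU1 inE Dv1 addnC.
      * rewrite addn0; apply: eq_card => y.
        by rewrite !inE /D' (negPf xv) (negPf hx) /= !andbF !orbF.
    have := h4 x xA; rewrite /beta' eo ei !natrD => hx.
    apply/eqP; rewrite -subr_eq0; apply/eqP.
    have -> : forall a b c d f : 'Z_3, a + c - (b + d) - f = (a - b - (f - c + d)) by move=> *; ring.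
    by rewrite hx subrr.
Qed.

End Part2.

Section Part3.
Set Implicit Arguments. Unset Strict Implicit. Unset Printing Implicit Defensive.
Import GRing.Theory.
Local Open Scope ring_scope.

Lemma S3on_grow (V : finType) (e : rel V) (A B : {set V}) :
  symmetric e -> irreflexive e -> S3on e A -> A \subset B ->
  (forall v, v \in B -> v \notin A -> (4 <= #|[set w in A | e v w]|)%N) -> S3on e B.
Proof.
move=> esym eirr.
move: {2}#|B :\: A| (erefl #|B :\: A|) => n; elim: n A => [|n IH] A hn hA sAB hdeg.
  suff -> : B = A by [].
  apply/eqP; rewrite eqEsubset sAB andbT; apply/subsetP => x xB.
  apply/negPn/negP => xA; move: hn; apply/eqP; rewrite -lt0n card_gt0.
  by apply/set0Pn; exists x; rewrite inE xA xB.
have [v] : exists v, v \in B :\: A by apply/set0Pn; rewrite -card_gt0 hn.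
rewrite inE => /andP[vA vB].
apply: (IH (v |: A)).
- move: hn; rewrite (cardsD1 v) inE vA vB /= add1n => -[<-]; apply: eq_card => x.
  by rewrite !inE negb_or; case: (x == v); case: (x \in A).
- exact: S3on_add (hdeg _ vB vA).
- by rewrite subUset sub1set vB sAB.
- move=> x xB; rewrite in_setU1 negb_or => /andP[_ xA].
  apply: leq_trans (hdeg _ xB xA) _; apply: subset_leq_card; apply/subsetP => w.
  by rewrite !inE => /andP[-> ->]; rewrite orbT.
Qed.

Lemma card_sum_bool (V : finType) (P : pred V) : #|[set y | P y]| = (\sum_y (P y : nat))%N.
Proof.
rewrite -sum1_card big_mkcond /=; apply: eq_bigr => y _; rewrite inE.
by case: (P y).
Qed.

Lemma sum_out_in (V : finType) (D : rel V) :
  (\sum_w outdeg D w = \sum_w indeg D w)%N.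
Proof.
rewrite /outdeg /indeg.
under eq_bigr do rewrite card_sum_bool.
under [RHS]eq_bigr do rewrite card_sum_bool.
exact: exchange_big.
Qed.

Lemma S3on_super (V : finType) (e1 e2 : rel V) (A : {set V}) :
  symmetric e1 -> symmetric e2 -> irreflexive e2 -> S3on e1 A ->
  (forall u w, u \in A -> w \in A -> e1 u w -> e2 u w) -> S3on e2 A.
Proof.
move=> s1 s2 i2 hA sub beta hsum.
pose D0 u w := [&& u \in A, w \in A, e2 u w, ~~ e1 u w & (enum_rank u < enum_rank w)%N].
have D0A u w : D0 u w -> (u \in A) && (w \in A) by case/and5P => -> ->.
pose g w : 'Z_3 := (outdeg D0 w)%:R - (indeg D0 w)%:R.
pose beta' w := beta w - g w.
have g0 w : w \notin A -> g w = 0.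
  move=> wA; rewrite /g /outdeg /indeg.
  have -> : [set y | D0 w y] = set0.
    by apply/setP => y; rewrite !inE; apply/negP => /D0A /andP[]; rewrite (negPf wA).
  have -> : [set y | D0 y w] = set0.
    by apply/setP => y; rewrite !inE; apply/negP => /D0A /andP[_]; rewrite (negPf wA).
  by rewrite cards0 subrr.
have hsum' : \sum_(w in A) beta' w = 0.
  rewrite /beta' sumrB hsum sub0r.
  have -> : \sum_(w in A) g w = \sum_w g w.
    rewrite [RHS](bigID (fun w => w \in A)) /= [X in _ = _ + X]big1 ?addr0 //.
  by rewrite /g sumrB -!natr_sum sum_out_in subrr oppr0.
have [D [h1 h2 h3 h4]] := hA beta' hsum'.
pose D' u w := D u w || D0 u w.
have dis u w : D u w -> D0 u w = false.
  by move/h1 => /and3P[_ _ e]; rewrite /D0 e /= !andbF.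
exists D'; split.
- move=> u w /orP[/h1/and3P[uA wA e] | /and5P[uA wA e _ _]]; rewrite uA wA //=; exact: sub.
- move=> u w uA wA euw; case: (boolP (e1 u w)) => e1uw.
  + have e1wu : e1 w u by rewrite s1.
    by rewrite /D' /D0 e1uw e1wu /= !andbF !orbF; apply: h2.
  + have e1wu : ~~ e1 w u by rewrite s1.
    have nD u' w' : ~~ e1 u' w' -> D u' w' = false.
      by move=> h; apply/negP => /h1/and3P[_ _]; apply/negP.
    rewrite /D' nD // nD // /D0 uA wA euw s2 euw e1uw e1wu /=.
    have uw : u != w by apply: contraTneq euw => ->; rewrite i2.
    have : enum_rank u != enum_rank w by apply: contra uw => /eqP/enum_rank_inj ->.
    by rewrite neq_ltn; case: ltngtP.
- move=> u w uA wA; apply: (connect_sub (e := D)) (h3 _ _ uA wA) => a b hab.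
  by apply: connect1; rewrite /D' hab.
- move=> w wA.
  have eo : outdeg D' w = (outdeg D w + outdeg D0 w)%N.
    rewrite /outdeg -cardsUI.
    have -> : [set y | D w y] :&: [set y | D0 w y] = set0.
      by apply/setP => y; rewrite !inE; apply/negP => /andP[/dis ->].
    by rewrite cards0 addn0; apply: eq_card => y; rewrite !inE.
  have ei : indeg D' w = (indeg D w + indeg D0 w)%N.
    rewrite /indeg -cardsUI.
    have -> : [set y | D y w] :&: [set y | D0 y w] = set0.
      by apply/setP => y; rewrite !inE; apply/negP => /andP[/dis ->].
    by rewrite cards0 addn0; apply: eq_card => y; rewrite !inE.
  have := h4 w wA; rewrite /beta' /g eo ei !natrD => hx.
  apply/eqP; rewrite -subr_eq0; apply/eqP.
  have -> : forall a b c d f : 'Z_3, a + c - (b + d) - f = (a - b - (f - (c - d))) by move=> *; ring.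
  by rewrite hx subrr.
Qed.

End Part3.

Section Part4.
Set Implicit Arguments. Unset Strict Implicit. Unset Printing Implicit Defensive.
Import GRing.Theory.
Definition wtable : seq (nat * nat * nat * nat * seq (seq bool) * seq nat) := [::
(0,0,0,0,[::[::false;true;false;false;true;true;false];[::false;false;true;true;true;false;false];[::true;true;false;true;true;true;true];[::true;false;true;false;false;false;true];[::true;true;true;true;false;true;true]],[::0;6;1;7;2;6;3;5;0;9;4;5;0;6;1;7;2;8;0;9;4;10;3;11]);
(0,0,0,3,[::[::true;false;true;true;true;true;true];[::false;false;true;false;false;true;true];[::false;true;false;true;true;false;false];[::false;true;false;false;false;true;true];[::true;false;false;true;true;false;false]],[::0;5;1;7;2;8;3;6;4;5;2;6;0;7;2;8;1;7;2;9;1;10;2;6;0;11;2;6]);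
(0,0,0,6,[::[::false;false;true;true;false;false;true];[::false;true;false;true;false;true;false];[::false;true;false;false;true;true;false];[::true;false;false;false;true;false;true];[::true;false;true;false;false;false;true]],[::0;7;1;8;2;6;3;9;4;5;1;6;0;7;1;8;2;9;1;10;0;11;1;6]);
(0,0,1,1,[::[::false;true;false;false;false;true;true];[::true;false;true;false;true;false;false];[::true;false;true;true;true;true;true];[::true;false;false;true;false;false;true];[::true;true;true;true;true;true;false]],[::0;6;1;5;0;6;2;7;3;11;4;5;0;6;1;7;3;8;1;9;0;10;3;11;1;5]);
(0,0,1,4,[::[::true;true;true;true;false;true;true];[::true;false;false;false;true;true;false];[::true;false;true;false;false;false;true];[::false;true;false;true;true;false;false];[::true;false;false;false;false;true;true]],[::0;6;1;9;2;5;3;6;4;5;3;6;2;7;3;8;1;9;0;10;2;11;1;9]);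
(0,0,2,2,[::[::true;true;true;false;true;true;true];[::true;true;false;false;false;false;true];[::true;true;false;false;true;false;false];[::true;true;false;true;true;true;true];[::false;false;true;true;false;true;false]],[::0;7;1;11;2;5;4;7;3;5;4;7;1;5;4;7;1;6;4;7;3;8;0;9;4;10;1;11;4;8]);
(0,0,2,5,[::[::false;true;false;true;false;true;false];[::true;true;false;false;true;false;false];[::true;false;true;false;true;false;false];[::true;true;false;false;false;false;true];[::true;true;true;true;false;true;true]],[::0;8;1;6;2;7;3;6;2;9;4;5;0;6;2;7;0;8;1;9;0;10;3;11]);
(0,0,3,0,[::[::false;true;true;false;true;false;false];[::true;true;false;false;false;false;true];[::false;false;true;true;false;true;false];[::false;true;true;true;true;true;true];[::false;true;true;true;true;true;true]],[::0;7;1;5;2;7;1;5;3;7;1;5;4;7;1;5;0;6;2;7;1;5;2;8;0;9;2;10;1;11]);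
(0,0,3,3,[::[::true;true;true;false;false;false;false];[::true;false;true;false;false;true;false];[::true;false;true;false;false;false;true];[::false;false;false;true;true;false;true];[::true;false;true;true;true;true;true]],[::0;6;1;10;2;5;3;8;0;6;4;5;3;8;0;6;1;7;3;8;0;5;3;9;1;10;2;11]);
(0,0,4,1,[::[::true;true;true;false;false;false;false];[::true;false;false;false;true;true;false];[::false;true;true;false;false;false;true];[::true;true;true;true;false;true;true];[::true;true;true;false;true;true;true]],[::0;6;1;5;2;6;1;9;3;8;4;5;2;6;1;5;2;7;1;9;3;8;1;9;3;10;2;11]);
(0,0,5,2,[::[::true;true;true;true;true;true;false];[::true;true;false;true;false;false;false];[::true;true;false;false;true;false;false];[::false;false;false;true;true;false;true];[::true;true;false;true;true;true;true]],[::0;7;1;8;2;5;3;11;0;7;4;5;3;8;2;6;3;11;0;7;1;8;2;9;1;5;3;11;0;10;3;11]);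
(0,0,6,0,[::[::false;false;false;true;true;true;false];[::false;false;true;false;true;false;true];[::false;false;true;false;true;true;false];[::true;true;true;false;true;true;true];[::false;false;true;false;false;true;true]],[::0;8;1;11;2;7;0;8;3;5;4;7;0;8;3;5;0;8;3;6;1;7;0;8;1;9;4;10;1;11]);
(0,1,0,2,[::[::false;true;false;false;false;false;false];[::true;false;false;false;true;false;true];[::false;true;true;true;true;true;true];[::true;false;true;true;true;true;true];[::false;false;true;true;false;true;false]],[::0;6;1;5;2;6;3;5;4;7;1;5;0;6;3;7;0;6;3;8;1;9;4;10;1;11]);
(0,1,0,5,[::[::false;false;true;false;false;false;false];[::false;true;false;true;false;false;true];[::true;false;true;true;true;true;true];[::true;false;false;false;true;true;false];[::false;true;false;false;false;true;true]],[::0;7;1;6;2;7;3;5;4;6;2;5;1;6;0;7;1;8;3;9;4;10;1;11]);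
(0,1,1,0,[::[::true;false;true;false;true;false;true];[::false;true;false;false;true;true;false];[::true;false;false;true;false;false;true];[::true;true;true;true;false;true;true];[::true;true;true;true;true;true;false]],[::0;5;1;6;2;5;1;9;3;11;4;5;1;6;0;7;2;8;0;9;3;10;0;11;1;6]);
(0,1,1,3,[::[::false;false;true;false;true;true;true];[::true;false;false;true;true;false;false];[::false;false;true;false;false;true;true];[::false;true;false;true;true;false;false];[::false;true;false;false;false;true;true]],[::0;7;1;5;2;7;3;8;4;6;1;5;3;6;0;7;1;8;0;9;2;10;1;5;0;11;1;5]);
(0,1,1,6,[::[::false;true;false;false;false;false;false];[::true;false;false;true;false;false;true];[::false;false;true;false;false;true;true];[::false;false;true;false;true;true;false];[::false;true;false;true;true;false;false]],[::0;6;1;5;2;11;3;7;4;6;1;5;0;6;2;7;1;8;3;9;2;10;1;11]);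
(0,1,2,1,[::[::true;false;false;true;true;false;true];[::true;false;true;true;false;false;false];[::false;true;false;false;false;true;true];[::true;false;false;false;true;true;false];[::true;false;true;true;true;true;true]],[::0;9;1;5;2;6;3;5;2;6;4;5;2;6;1;7;0;8;3;9;2;10;0;11;1;7]);
(0,1,2,4,[::[::true;false;false;true;true;false;true];[::true;false;false;false;false;true;true];[::true;false;false;false;true;false;true];[::false;true;true;true;false;false;false];[::true;false;true;false;false;true;false]],[::0;8;1;10;2;5;3;6;4;5;3;6;4;7;0;8;2;9;1;10;0;11;3;6]);
(0,1,3,2,[::[::true;false;true;false;false;true;true];[::true;false;true;true;false;false;false];[::true;false;true;true;true;true;true];[::false;true;false;false;true;true;false];[::true;false;true;false;false;false;true]],[::0;10;1;5;3;6;2;5;3;6;4;5;3;6;0;7;3;6;1;8;3;9;0;10;4;11;1;8]);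
(0,1,4,0,[::[::false;false;true;false;false;false;false];[::false;true;true;true;true;true;true];[::false;true;false;true;false;true;false];[::true;true;true;true;true;false;true];[::false;true;true;true;true;true;true]],[::0;7;2;10;3;5;1;7;2;10;3;5;4;10;3;5;1;6;0;7;2;8;0;7;2;10;3;9;2;10;3;11]);
(0,1,4,3,[::[::false;false;false;true;false;false;false];[::false;true;true;false;true;false;false];[::false;true;true;false;false;false;true];[::false;true;true;false;false;true;false];[::true;true;true;false;true;true;true]],[::0;8;1;9;2;11;3;6;0;8;4;5;1;6;0;8;1;7;0;8;1;9;3;10;2;11]);
(0,1,5,1,[::[::false;false;false;true;false;false;false];[::false;false;true;true;false;false;true];[::false;false;true;false;false;true;true];[::true;false;true;true;false;false;false];[::false;true;true;true;true;true;true]],[::0;8;2;10;1;8;2;10;3;5;4;6;3;5;4;6;1;7;0;8;2;10;3;5;4;9;2;10;1;11]);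
(0,1,7,0,[::[::false;false;false;false;false;false;true];[::false;true;true;false;true;false;false];[::false;true;true;false;false;false;true];[::false;true;true;false;false;false;true];[::true;true;true;true;false;true;true]],[::0;11;1;9;2;11;1;9;3;11;1;9;4;5;1;6;0;11;1;7;0;11;1;9;4;8;1;9;4;10;0;11;1;6]);
(0,2,0,1,[::[::false;false;true;false;true;true;true];[::false;false;false;false;false;true;false];[::true;true;true;true;true;false;true];[::true;true;false;true;false;false;false];[::false;true;true;true;true;true;true]],[::0;7;1;10;2;7;3;5;4;7;3;5;4;6;0;7;3;8;0;9;1;10;2;11;3;5]);
(0,2,0,4,[::[::false;false;false;false;true;false;false];[::false;false;false;true;true;true;true];[::true;false;true;false;false;false;true];[::true;true;true;false;true;true;true];[::false;true;false;true;false;true;false]],[::0;9;2;5;1;8;2;5;1;8;3;5;4;6;2;5;4;6;2;7;1;8;0;9;4;10;2;11]);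
(0,2,0,7,[::[::false;false;true;false;false;false;false];[::false;false;false;false;false;false;true];[::true;false;false;false;false;true;true];[::true;true;true;true;true;true;false];[::false;true;false;true;true;false;false]],[::0;7;1;11;0;7;2;11;3;5;4;6;2;5;4;6;0;7;4;8;0;7;4;9;2;10;1;11]);
(0,2,1,2,[::[::false;false;false;true;true;true;true];[::false;false;true;false;false;false;false];[::true;true;false;true;false;false;false];[::false;false;false;false;true;true;true];[::false;true;true;true;true;true;true]],[::0;8;1;7;2;5;3;9;2;5;4;7;2;5;4;6;1;7;0;8;3;9;1;7;0;10;1;7;0;11;1;7]);
(0,2,1,5,[::[::true;false;false;false;false;false;false];[::false;false;true;false;false;false;false];[::true;true;true;false;true;true;true];[::true;false;false;true;false;false;true];[::true;true;false;true;true;true;true]],[::0;5;1;7;3;8;2;6;3;5;1;7;4;5;1;7;4;6;1;7;3;8;2;9;1;7;4;10;3;11]);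
(0,2,2,0,[::[::true;false;false;true;true;true;false];[::true;false;true;true;false;false;true];[::true;true;true;false;false;false;false];[::false;false;false;false;true;true;true];[::true;false;true;true;true;true;true]],[::0;9;1;8;2;5;3;9;2;6;4;5;3;9;2;6;1;7;0;8;3;9;1;5;3;10;1;11]);
(0,2,2,3,[::[::true;true;false;false;false;true;true];[::false;false;true;false;false;false;false];[::true;false;false;false;true;false;true];[::true;false;true;true;true;true;true];[::true;false;false;true;false;true;false]],[::0;5;1;7;2;9;0;6;3;7;4;5;1;7;0;6;1;7;4;8;2;9;0;10;2;11;1;7]);
(0,2,3,1,[::[::false;false;true;false;false;false;false];[::false;true;true;false;true;true;false];[::false;true;true;true;true;true;true];[::true;true;true;false;true;true;true];[::false;true;false;true;false;false;true]],[::0;7;4;8;1;7;4;8;3;5;2;8;3;5;4;8;3;5;1;6;0;7;4;8;1;9;4;8;1;10;4;11]);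
(0,2,3,4,[::[::false;false;true;false;false;false;false];[::true;true;true;false;false;false;true];[::true;true;false;false;true;false;false];[::true;true;true;true;false;true;true];[::true;true;true;true;true;true;false]],[::0;7;2;9;1;7;2;9;3;11;4;5;0;7;2;6;0;7;2;9;3;8;2;9;3;10;1;11]);
(0,2,4,2,[::[::false;false;false;false;false;false;true];[::true;true;true;false;false;false;true];[::true;true;false;false;false;true;false];[::true;true;false;true;true;true;true];[::true;true;false;false;true;false;false]],[::0;11;2;10;1;7;2;10;1;7;3;8;4;5;0;11;2;6;0;11;2;10;1;7;3;8;4;9;2;10;0;11;2;5]);
(0,2,5,0,[::[::false;false;false;true;false;false;false];[::true;false;true;false;false;true;true];[::true;false;true;false;false;true;false];[::true;true;true;false;true;true;true];[::true;false;true;false;false;false;true]],[::0;8;1;11;2;5;0;8;3;6;4;5;0;8;3;6;1;7;0;8;3;9;1;10;4;11]);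
(0,2,6,1,[::[::true;true;true;false;false;false;true];[::false;true;false;false;false;false;false];[::true;false;true;true;false;false;false];[::true;true;true;false;false;false;false];[::true;true;true;false;true;true;true]],[::0;5;1;6;2;8;3;6;2;8;4;5;1;6;2;7;1;6;2;8;4;9;2;8;4;10;0;11;2;8]);
(0,3,0,0,[::[::true;true;true;false;true;false;false];[::false;false;true;true;true;false;true];[::true;true;false;true;false;true;false];[::true;true;true;false;true;true;true];[::false;false;false;true;false;true;true]],[::0;5;1;7;2;8;3;5;4;8;0;5;1;7;2;6;1;7;2;8;0;9;2;10;1;11]);
(0,3,0,3,[::[::false;false;false;true;false;false;false];[::true;true;false;false;true;true;false];[::false;false;false;false;false;false;true];[::false;true;true;true;true;true;true];[::true;false;true;true;true;true;true]],[::0;8;1;5;2;11;1;5;3;6;4;5;3;6;4;7;0;8;1;9;0;8;1;10;2;11]);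
(0,3,0,6,[::[::false;false;false;true;false;false;false];[::false;false;true;false;true;true;true];[::true;false;false;false;false;false;false];[::true;true;false;true;true;true;true];[::false;true;true;false;false;false;true]],[::0;8;1;7;2;5;1;7;3;5;4;6;2;5;4;6;1;7;0;8;1;9;0;8;1;10;4;11]);
(0,3,1,1,[::[::true;true;false;true;false;true;false];[::false;false;true;false;false;false;false];[::true;false;true;false;true;false;true];[::true;false;true;true;true;true;true];[::true;true;false;true;true;true;true]],[::0;5;1;7;0;6;2;7;0;6;3;7;4;5;1;7;0;6;1;7;0;8;2;9;0;10;2;11]);
(0,3,1,4,[::[::true;false;true;false;false;true;true];[::false;true;false;false;false;false;false];[::true;false;false;false;true;true;true];[::true;false;false;true;true;false;false];[::true;true;true;true;false;true;true]],[::0;5;1;6;2;10;3;9;4;5;1;6;0;7;3;8;2;9;0;10;1;6;0;11;1;6]);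
(0,3,2,2,[::[::false;true;false;false;true;true;true];[::false;false;false;true;false;false;false];[::false;false;false;false;true;false;false];[::true;false;true;true;true;true;true];[::false;false;true;false;false;true;true]],[::0;6;1;8;2;9;1;8;0;6;3;5;4;7;0;6;3;5;0;6;3;7;1;8;0;9;4;10;1;8;0;11;1;8]);
(0,3,2,5,[::[::false;false;true;false;false;false;false];[::true;false;false;false;false;false;false];[::true;true;false;false;false;true;true];[::true;false;true;true;true;true;true];[::true;false;false;true;true;false;false]],[::0;7;1;5;0;7;2;6;3;7;4;5;0;7;2;6;0;7;4;8;0;7;4;9;2;10;0;7;2;11]);
(0,3,3,0,[::[::false;true;true;false;true;false;true];[::false;true;true;true;false;true;false];[::true;false;false;false;false;false;false];[::false;true;true;true;true;true;true];[::false;true;true;true;true;true;true]],[::0;9;1;6;2;5;3;6;2;5;4;6;2;5;0;6;2;5;0;7;2;5;1;8;0;9;1;10;0;11;1;8]);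
(0,3,3,3,[::[::true;false;true;false;false;true;true];[::false;false;false;true;false;false;false];[::true;false;false;false;false;false;false];[::true;false;false;false;true;false;true];[::true;true;false;true;true;true;true]],[::0;5;1;8;2;5;1;8;3;9;0;7;4;5;1;8;0;7;4;6;0;7;1;8;3;9;0;10;3;11;1;8]);
(0,3,4,1,[::[::true;false;false;false;false;false;false];[::true;false;true;false;false;true;true];[::true;false;true;false;false;true;true];[::true;true;true;false;true;true;true];[::false;false;true;true;true;false;false]],[::0;5;4;8;1;5;4;8;2;5;4;8;3;5;4;7;0;5;4;8;3;6;1;7;0;5;4;8;3;9;1;10;4;8;1;11]);
(0,3,5,2,[::[::false;true;false;false;false;false;false];[::false;false;true;true;false;true;true];[::false;false;true;false;false;false;false];[::true;false;true;false;false;true;false];[::false;false;true;false;true;false;true]],[::0;6;1;8;2;7;0;6;3;5;4;9;3;5;0;6;1;7;0;6;1;8;4;9;1;10;4;11]);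
(0,3,6,0,[::[::false;true;true;false;false;true;true];[::false;true;true;false;false;true;true];[::false;false;false;true;false;false;false];[::false;true;true;false;false;true;false];[::true;true;true;false;true;true;true]],[::0;6;2;8;1;6;2;8;3;6;2;8;4;5;0;6;2;8;0;7;2;8;4;9;0;10;2;8;0;11;2;8]);
(0,4,0,2,[::[::false;true;true;true;true;false;false];[::false;false;false;false;true;false;false];[::true;false;true;false;false;true;true];[::false;true;false;true;false;true;true];[::true;false;true;true;true;true;true]],[::0;6;1;9;2;5;3;6;4;5;0;6;2;7;3;8;1;9;2;10;0;6;2;11]);
(0,4,0,5,[::[::false;true;true;false;true;true;false];[::true;false;true;false;false;true;true];[::false;false;false;false;false;false;true];[::false;false;false;true;true;true;true];[::true;true;false;true;false;false;false]],[::0;6;1;5;2;11;0;6;3;9;4;5;0;6;1;7;3;8;0;9;1;10;2;11]);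
(0,4,1,0,[::[::false;false;true;true;true;true;false];[::false;true;false;false;false;false;false];[::false;false;true;false;true;true;true];[::true;true;false;true;false;false;true];[::false;true;true;true;true;true;true]],[::0;7;1;6;2;7;3;5;4;7;3;5;1;6;0;7;3;8;2;9;1;6;0;10;3;11]);
(0,4,1,3,[::[::true;true;true;false;false;true;false];[::false;false;false;true;true;true;true];[::false;false;true;false;true;true;true];[::false;false;false;true;false;false;false];[::false;true;false;false;true;false;true]],[::0;5;1;8;2;7;3;8;4;9;0;5;4;6;2;7;1;8;2;9;0;10;4;11]);
(0,4,1,6,[::[::false;true;true;true;true;false;false];[::true;false;true;false;false;true;true];[::false;false;false;false;false;false;true];[::false;false;false;true;false;false;false];[::false;true;false;false;true;true;false]],[::0;6;1;5;2;11;3;8;4;6;1;5;0;6;1;7;3;8;4;9;1;10;2;11]);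
(0,4,2,1,[::[::true;false;false;true;true;false;true];[::false;true;false;false;false;false;false];[::true;false;false;true;true;true;false];[::true;false;true;false;false;true;true];[::true;false;true;true;true;true;true]],[::0;5;1;6;2;8;3;5;1;6;4;5;1;6;3;7;0;8;1;6;0;9;3;10;0;11;1;6]);
(0,4,2,4,[::[::true;false;false;false;false;false;false];[::false;false;false;false;false;false;true];[::true;true;false;false;true;true;false];[::true;false;true;true;false;false;true];[::true;false;true;true;true;true;true]],[::0;5;1;11;2;6;3;7;2;6;4;5;1;11;2;6;3;7;2;6;3;8;2;9;1;11;2;10;1;11]);
(0,4,3,2,[::[::true;false;true;false;false;true;true];[::true;true;true;true;false;false;false];[::true;false;true;false;true;false;true];[::false;false;false;false;false;true;false];[::true;false;true;true;true;true;true]],[::0;10;1;6;2;5;3;10;1;6;4;5;3;10;1;6;0;7;3;10;1;8;2;9;0;10;2;11;1;6]);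
(0,4,4,0,[::[::false;false;false;true;true;true;true];[::false;false;false;true;false;false;false];[::false;true;false;false;false;false;false];[::false;false;false;true;true;true;true];[::true;false;true;true;true;true;true]],[::0;9;1;8;2;6;3;8;2;6;4;5;2;6;4;7;0;8;2;6;0;9;2;6;0;10;2;6;0;11;2;6]);
(0,4,4,3,[::[::true;true;true;false;false;true;false];[::false;true;false;false;false;false;false];[::false;false;false;false;true;false;false];[::false;true;false;false;true;true;true];[::false;true;false;true;false;false;true]],[::0;5;1;6;2;9;0;5;3;9;4;8;0;5;1;6;2;9;0;7;4;8;2;9;0;10;4;11]);
(0,4,5,1,[::[::true;false;false;false;false;false;false];[::true;false;true;false;true;true;false];[::true;false;false;false;true;true;true];[::true;true;false;false;true;false;true];[::false;false;false;true;true;false;true]],[::0;5;4;8;1;7;2;10;3;5;4;8;0;5;4;8;3;6;1;7;4;8;1;9;0;5;4;8;1;10;3;11]);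
(0,4,7,0,[::[::false;false;false;false;true;false;false];[::false;true;true;false;true;false;true];[::false;false;false;false;true;false;false];[::false;false;false;false;false;true;false];[::true;false;false;true;true;false;false]],[::0;9;3;10;1;6;2;9;3;10;4;5;1;6;3;10;1;7;4;8;0;9;3;10;1;11]);
(0,5,0,1,[::[::false;false;true;true;true;false;true];[::false;true;true;true;false;true;false];[::true;true;false;false;true;false;true];[::true;true;false;false;true;true;false];[::false;false;true;true;false;true;true]],[::0;9;1;7;2;11;3;5;4;7;2;5;1;6;0;7;2;5;0;8;2;9;1;10;0;11;1;6]);
(0,5,0,4,[::[::false;false;true;false;true;true;true];[::false;false;true;true;false;true;true];[::true;false;false;false;false;false;false];[::false;true;false;true;true;false;true];[::true;true;false;false;true;true;false]],[::0;9;1;7;2;5;3;8;4;5;3;6;0;7;3;8;0;9;1;10;3;11;2;5]);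
(0,5,0,7,[::[::false;true;false;false;true;true;true];[::false;true;true;false;true;true;false];[::true;false;false;false;false;false;false];[::false;false;false;true;false;false;false];[::true;false;true;true;false;false;true]],[::0;11;1;6;2;5;3;8;0;6;4;5;0;6;4;7;3;8;0;9;2;5;0;10;4;11;1;7]);
(0,5,1,2,[::[::false;true;false;false;false;false;false];[::true;true;false;false;false;true;true];[::false;false;true;true;true;false;true];[::false;false;true;true;true;true;false];[::false;false;false;true;true;true;true]],[::0;6;2;7;1;5;2;11;3;7;4;8;1;5;0;6;2;7;4;8;0;6;2;9;1;10;2;11]);
(0,5,1,5,[::[::false;false;false;false;true;false;false];[::false;true;true;true;false;false;true];[::false;false;false;false;false;true;false];[::false;false;false;true;true;true;true];[::true;true;true;false;false;false;true]],[::0;9;1;6;2;10;1;6;3;8;4;5;1;6;0;9;1;7;3;8;0;9;2;10;1;11]);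
(0,5,2,0,[::[::false;true;true;false;false;true;true];[::true;true;false;false;true;false;true];[::false;true;false;true;true;true;false];[::false;false;true;true;true;false;true];[::false;true;true;true;false;true;false]],[::0;7;1;5;2;6;3;9;4;7;1;5;0;6;3;7;2;8;1;9;0;10;1;11;2;8]);
(0,5,2,3,[::[::true;true;false;false;false;true;true];[::false;false;true;false;false;false;false];[::true;false;false;true;true;true;false];[::true;false;false;true;false;true;true];[::true;false;true;false;true;false;true]],[::0;5;1;7;2;9;3;8;4;5;1;7;0;6;1;7;2;8;4;9;0;10;4;11;1;7]);
(0,5,3,1,[::[::true;false;false;false;true;true;true];[::false;false;false;false;true;false;false];[::false;false;false;true;true;true;true];[::false;false;true;true;false;true;true];[::false;true;false;false;false;false;false]],[::0;5;1;9;3;7;2;9;3;7;4;6;0;5;4;6;3;7;2;8;0;9;3;10;1;9;3;11;4;6]);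
(0,5,3,4,[::[::true;false;true;false;true;true;false];[::false;false;true;false;true;true;true];[::true;true;true;true;false;false;false];[::true;false;false;false;false;false;false];[::true;false;true;true;false;false;true]],[::0;5;1;9;2;6;3;5;1;9;4;5;1;9;2;6;0;7;3;5;1;9;2;8;0;9;2;5;1;10;4;11]);
(0,5,4,2,[::[::true;true;false;true;false;false;true];[::true;true;false;true;false;false;true];[::true;true;false;true;false;false;true];[::true;true;false;false;true;true;false];[::false;false;true;true;true;true;false]],[::0;5;4;7;1;5;4;7;2;8;3;5;4;7;0;5;4;7;0;6;4;7;0;8;3;9;0;5;4;10;0;11;3;9]);
(0,5,5,0,[::[::false;false;false;false;true;false;false];[::true;false;false;true;false;true;true];[::true;true;false;false;false;true;true];[::true;false;true;false;false;true;true];[::true;false;false;false;false;false;false]],[::0;9;1;8;2;6;3;7;4;5;0;9;2;6;3;7;1;8;0;9;1;10;0;9;1;11]);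
(0,5,6,1,[::[::false;false;true;true;true;false;true];[::false;false;false;true;false;false;false];[::false;true;false;true;false;true;true];[::true;false;false;false;false;false;false];[::false;false;false;true;false;false;false]],[::0;7;1;8;3;5;2;6;3;5;4;8;3;5;2;6;0;7;1;8;3;5;0;9;2;10;0;11;3;5]);
(1,0,0,1,[::[::true;false;false;false;false;false;true];[::false;true;true;true;true;true;true];[::false;true;false;false;true;true;false];[::true;true;true;true;true;false;true];[::false;false;true;true;false;true;false]],[::0;5;1;7;2;10;3;5;4;7;0;5;1;6;4;7;0;5;1;8;2;9;4;10;0;11;2;6]);
(1,0,0,4,[::[::false;false;false;true;true;false;false];[::true;false;true;true;true;true;true];[::false;false;true;false;false;true;true];[::false;true;false;false;true;false;true];[::true;true;false;false;false;true;false]],[::0;8;3;6;1;5;2;7;3;9;4;5;3;6;1;7;0;8;3;9;2;10;3;11]);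
(1,0,0,7,[::[::true;false;true;false;false;false;false];[::true;true;false;false;false;false;true];[::false;false;false;true;true;true;false];[::false;true;false;false;false;true;true];[::false;false;true;true;true;false;false]],[::0;7;1;5;2;8;3;6;4;7;1;5;3;6;0;7;2;8;0;5;2;9;3;10;1;11]);
(1,0,1,2,[::[::true;false;false;true;true;true;true];[::true;false;false;false;true;false;true];[::true;true;true;false;false;false;false];[::true;false;true;true;true;true;true];[::false;true;false;true;false;true;false]],[::0;8;1;9;2;6;3;5;4;6;0;5;4;6;3;7;0;8;1;9;4;10;1;11;2;6]);
(1,0,1,5,[::[::false;false;false;true;false;true;false];[::true;true;false;true;true;true;true];[::true;false;true;false;false;false;true];[::true;false;false;false;true;false;true];[::true;true;true;false;false;false;false]],[::0;8;2;7;1;6;2;7;3;9;4;5;0;8;4;6;2;7;0;8;3;9;0;10;2;11]);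
(1,0,2,0,[::[::false;false;false;false;false;true;true];[::false;true;true;true;true;true;true];[::false;true;true;true;true;true;true];[::true;true;false;true;false;false;false];[::false;true;true;false;true;false;false]],[::0;10;3;5;1;7;3;5;2;7;3;5;4;7;3;5;1;6;0;10;4;7;3;8;4;9;0;10;3;5;0;11;3;5]);
(1,0,2,3,[::[::false;false;false;false;false;true;true];[::true;true;true;false;false;false;false];[::true;true;false;false;true;false;false];[::true;true;false;true;true;true;true];[::true;true;true;true;false;true;true]],[::0;10;1;7;2;9;1;7;3;9;4;5;0;10;1;6;0;10;1;7;3;8;2;9;0;10;1;5;0;11;1;5]);
(1,0,3,1,[::[::false;false;false;true;false;true;false];[::false;true;true;false;false;false;true];[::false;true;true;false;true;false;false];[::true;true;true;false;true;true;true];[::false;true;true;true;true;true;true]],[::0;8;1;11;2;6;0;8;3;5;4;8;3;5;1;6;0;8;1;7;0;8;2;9;0;10;1;11]);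
(1,0,3,4,[::[::false;false;true;false;false;false;true];[::false;true;true;true;true;true;true];[::false;true;false;true;true;false;false];[::false;true;true;false;false;true;false];[::true;true;true;false;false;false;false]],[::0;11;4;5;1;7;2;8;3;10;4;5;1;6;0;7;2;8;0;7;2;9;3;10;0;11;2;6]);
(1,0,4,2,[::[::true;true;true;true;false;false;true];[::true;true;false;true;true;true;true];[::false;false;false;true;true;false;true];[::true;true;false;false;false;true;false];[::true;true;false;true;false;false;false]],[::0;7;1;5;2;8;3;10;4;5;2;8;3;6;2;9;0;7;1;8;3;5;2;9;3;10;0;11;3;10]);
(1,0,5,0,[::[::false;true;true;false;false;false;false];[::false;false;false;true;false;true;true];[::false;true;true;false;false;false;true];[::true;true;true;false;true;true;true];[::false;true;true;false;false;true;false]],[::0;6;1;8;2;6;1;8;3;5;4;6;1;8;3;5;0;6;1;8;0;7;1;8;3;9;1;10;2;11]);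
(1,0,6,1,[::[::false;true;false;true;true;true;true];[::false;true;true;true;false;false;false];[::false;true;false;true;false;true;false];[::true;false;false;false;false;true;true];[::false;true;false;true;false;true;false]],[::0;9;1;7;2;6;3;5;4;6;3;5;0;6;3;5;1;7;0;8;3;5;0;9;2;10;1;6;3;11;1;7]);
(1,1,0,0,[::[::false;true;true;true;true;false;true];[::false;true;false;false;false;false;false];[::true;false;false;false;true;true;false];[::true;false;true;true;true;true;true];[::true;true;true;true;false;true;true]],[::0;7;1;6;2;5;0;6;3;9;4;5;0;6;3;7;1;6;3;8;2;9;4;10;0;11;2;5]);
(1,1,0,3,[::[::false;false;false;false;false;true;true];[::false;false;true;false;false;false;false];[::false;true;false;true;true;false;false];[::true;true;false;true;true;true;true];[::true;false;true;true;true;true;true]],[::0;10;1;7;2;6;1;7;3;6;4;5;2;6;1;7;2;8;0;10;2;9;0;10;1;7;0;11;1;7]);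
(1,1,0,6,[::[::false;false;false;true;true;false;false];[::false;false;true;false;true;true;true];[::true;true;false;false;false;false;true];[::false;true;true;true;false;false;false];[::true;false;false;false;false;true;true]],[::0;8;1;7;2;5;3;6;4;5;3;6;1;7;0;8;1;9;4;10;2;11]);
(1,1,1,1,[::[::true;false;true;false;true;true;true];[::false;true;false;false;false;false;false];[::true;true;true;true;false;true;true];[::true;false;true;true;true;true;true];[::true;false;false;true;true;false;false]],[::0;5;1;6;0;9;2;6;3;7;4;5;1;6;0;7;4;8;0;9;2;10;1;6;0;11;1;6]);
(1,1,1,4,[::[::false;false;true;false;false;true;false];[::false;false;false;true;false;false;false];[::true;false;false;false;true;false;true];[::false;true;true;true;true;true;true];[::false;true;false;false;false;true;true]],[::0;7;1;8;2;5;3;7;4;6;2;5;3;6;0;7;1;8;2;9;0;10;2;11]);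
(1,1,2,2,[::[::false;false;false;true;false;true;false];[::true;false;false;false;false;false;false];[::true;false;false;false;true;false;true];[::true;false;true;true;true;true;true];[::true;true;true;false;true;true;true]],[::0;8;1;5;0;8;2;5;0;8;4;6;3;8;4;5;0;8;4;6;3;7;0;8;2;9;0;10;2;11]);
(1,1,2,5,[::[::true;false;true;true;true;false;true];[::false;false;false;false;false;true;false];[::true;false;false;true;true;false;false];[::true;false;true;false;false;false;true];[::true;true;false;false;false;true;false]],[::0;5;1;10;2;8;3;7;4;5;1;10;0;7;4;6;0;7;2;8;1;10;0;9;1;10;0;11;1;10]);
(1,1,3,0,[::[::true;true;true;true;true;false;false];[::false;false;false;false;false;false;true];[::false;true;true;true;true;true;true];[::false;true;true;true;true;true;true];[::false;true;true;false;false;true;false]],[::0;5;1;11;0;5;2;10;0;5;3;8;4;10;0;5;2;6;1;11;0;7;1;11;0;8;1;11;0;9;4;10;1;11]);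
(1,1,3,3,[::[::true;true;true;false;false;true;true];[::false;true;false;false;false;false;false];[::true;true;true;true;true;false;true];[::true;true;true;true;false;true;true];[::true;false;true;false;true;false;false]],[::0;5;1;6;4;9;0;10;2;9;3;6;4;5;1;6;4;7;1;6;4;9;3;8;4;9;0;10;2;11;4;9]);
(1,1,4,1,[::[::true;false;true;false;true;true;true];[::true;false;true;false;false;true;true];[::true;false;true;true;false;false;false];[::true;true;true;false;false;false;false];[::false;false;false;false;true;true;true]],[::0;9;1;10;2;8;3;5;4;9;1;5;4;9;3;6;0;7;4;9;2;8;0;9;1;10;2;5;4;11;2;8]);
(1,1,5,2,[::[::false;true;false;true;false;false;false];[::true;true;true;true;false;false;false];[::true;true;true;true;true;true;false];[::true;true;true;true;false;true;true];[::true;false;true;false;false;false;true]],[::0;6;4;11;1;6;4;11;2;9;3;6;4;5;0;6;4;7;0;8;4;11;2;9;3;10;4;11]);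
(1,1,6,0,[::[::false;false;false;false;true;false;true];[::true;false;false;false;true;true;true];[::true;true;true;false;true;true;true];[::true;false;false;false;true;true;false];[::true;false;false;true;false;true;false]],[::0;9;4;8;1;9;4;8;2;6;3;9;4;5;0;9;4;8;2;6;4;8;2;7;4;8;0;9;4;10;0;11;3;5]);
(1,2,0,2,[::[::false;false;true;true;true;true;true];[::true;true;false;true;true;false;false];[::false;false;false;false;false;false;true];[::true;false;true;false;false;true;false];[::false;true;true;true;true;true;true]],[::0;7;1;5;2;11;3;5;4;6;3;5;4;6;0;7;1;8;2;11;1;9;3;10;2;11;1;5]);
(1,2,0,5,[::[::false;true;false;false;true;false;false];[::false;false;false;true;true;true;true];[::true;false;true;false;false;true;true];[::true;false;true;false;false;false;true];[::false;true;false;true;false;true;false]],[::0;6;1;8;2;10;3;5;4;6;2;5;0;6;2;7;1;8;0;9;2;10;3;11]);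
(1,2,1,0,[::[::false;false;false;false;true;false;true];[::false;true;true;false;true;true;false];[::false;false;true;true;false;true;true];[::false;true;true;true;true;true;true];[::true;true;false;true;false;false;false]],[::0;11;1;6;2;7;4;5;3;7;4;5;1;6;2;7;4;8;0;9;2;10;0;11;1;6]);
(1,2,1,3,[::[::false;false;true;true;true;true;true];[::false;true;false;false;false;false;false];[::false;false;false;false;false;true;false];[::true;false;false;false;true;false;true];[::false;true;true;true;true;true;true]],[::0;7;1;6;2;10;3;5;4;6;3;5;1;6;0;7;1;6;0;8;3;9;2;10;3;11;1;6]);
(1,2,1,6,[::[::false;false;false;false;true;true;false];[::true;true;false;true;true;false;false];[::true;false;false;false;false;false;false];[::true;false;true;false;false;false;true];[::true;true;true;true;false;true;true]],[::0;10;1;6;2;5;0;9;3;5;0;9;4;5;0;9;4;6;3;7;1;8;0;9;4;10;3;11]);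
(1,2,2,1,[::[::true;false;false;false;false;true;false];[::true;true;false;true;false;false;true];[::false;false;false;false;true;false;false];[::true;false;true;true;true;true;true];[::true;false;true;true;true;true;true]],[::0;10;1;5;2;9;1;6;3;7;1;6;4;5;2;9;1;6;3;7;1;8;2;9;0;10;1;11]);
(1,2,2,4,[::[::true;false;false;true;true;true;true];[::true;false;true;false;false;true;true];[::true;false;false;false;false;false;false];[::true;true;false;true;false;false;false];[::false;false;true;false;true;false;true]],[::0;8;1;7;2;5;4;7;3;5;4;7;0;5;4;7;3;6;1;7;0;8;4;9;1;10;4;11;3;6]);
(1,2,3,2,[::[::true;true;true;true;true;false;false];[::false;false;true;false;false;false;false];[::true;true;false;false;false;true;true];[::true;true;true;true;false;true;true];[::true;true;true;false;true;true;true]],[::0;5;1;7;2;10;0;9;3;8;4;5;1;7;2;6;1;7;2;10;0;8;4;9;2;10;0;7;2;11]);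
(1,2,4,0,[::[::true;true;true;false;false;true;true];[::true;true;true;false;true;false;false];[::false;false;true;true;true;true;false];[::true;true;true;false;true;true;true];[::true;true;false;false;false;false;true]],[::0;10;1;5;2;8;3;7;4;5;2;7;4;6;2;7;4;5;2;8;1;9;0;10;4;11;1;9]);
(1,2,4,3,[::[::false;true;false;false;true;false;false];[::true;true;false;true;false;false;true];[::true;false;false;false;false;false;false];[::true;true;false;false;false;true;false];[::true;true;true;false;true;true;true]],[::0;9;1;6;2;5;0;9;3;10;1;8;4;5;0;6;2;5;0;9;1;8;4;7;1;8;0;9;3;10;1;11]);
(1,2,5,1,[::[::true;false;true;false;false;false;false];[::true;false;true;true;false;false;true];[::true;false;true;true;false;true;false];[::false;false;false;true;true;false;true];[::true;true;true;true;false;true;true]],[::0;5;3;9;1;11;2;5;3;9;4;5;3;9;4;6;0;7;3;8;0;5;3;9;2;10;1;11]);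
(1,2,7,0,[::[::true;false;true;true;false;true;true];[::false;false;true;true;false;true;true];[::false;false;true;true;false;true;true];[::false;false;true;false;true;false;true];[::false;true;false;true;false;true;false]],[::0;5;1;7;4;6;2;8;3;7;4;6;0;5;4;6;0;7;4;8;3;9;0;10;3;11;4;6]);
(1,3,0,1,[::[::false;false;true;true;true;true;true];[::true;false;true;true;false;false;true];[::true;true;false;false;true;true;false];[::false;true;false;false;false;false;false];[::false;true;true;true;true;true;true]],[::0;9;1;7;2;5;3;6;1;5;4;6;1;5;3;6;0;7;2;5;0;8;2;9;1;5;0;10;1;11;2;5]);
(1,3,0,4,[::[::false;true;false;true;true;true;true];[::true;false;false;false;true;true;true];[::false;false;true;false;true;true;true];[::true;false;false;false;false;false;false];[::false;true;true;true;false;false;false]],[::0;6;1;5;2;7;3;5;4;6;1;5;0;6;2;7;0;8;1;9;3;5;0;10;3;5;0;11;3;5]);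
(1,3,0,7,[::[::true;false;false;false;false;false;true];[::false;false;false;false;false;true;false];[::false;false;true;false;false;false;false];[::false;true;true;true;true;false;false];[::true;true;false;true;true;true;true]],[::0;5;1;10;2;7;0;5;3;7;4;5;3;6;2;7;4;8;0;5;3;9;1;10;0;11;1;10]);
(1,3,1,2,[::[::false;true;false;true;true;true;true];[::false;true;true;true;false;false;true];[::false;false;false;false;true;false;false];[::false;false;true;false;true;true;true];[::true;false;false;true;false;true;false]],[::0;9;1;6;2;9;1;6;3;7;4;5;0;6;3;7;0;8;2;9;4;10;1;11;4;5]);
(1,3,1,5,[::[::false;true;false;true;true;true;true];[::true;false;false;false;false;false;false];[::false;false;true;true;true;false;true];[::false;true;false;false;false;false;false];[::false;false;true;false;false;true;true]],[::0;6;1;5;2;7;3;6;4;7;1;5;0;6;2;7;0;8;1;5;0;9;4;10;2;11;1;5]);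
(1,3,2,0,[::[::true;false;true;true;true;false;true];[::true;true;false;false;true;true;false];[::true;false;false;true;false;true;true];[::false;false;true;false;false;false;false];[::true;false;true;true;true;true;true]],[::0;7;1;6;2;5;3;7;1;6;4;5;3;7;1;6;0;7;2;8;1;9;2;10;0;11;1;6]);
(1,3,2,3,[::[::true;true;true;false;false;true;true];[::true;true;false;false;true;true;false];[::true;true;false;true;false;false;true];[::true;true;false;true;false;false;true];[::false;false;true;false;true;true;false]],[::0;7;1;9;2;5;4;7;3;5;4;7;1;5;4;7;1;6;4;7;2;8;1;9;0;10;2;11;1;9]);
(1,3,3,1,[::[::false;true;true;false;true;true;true];[::false;false;true;true;true;false;true];[::false;false;false;false;false;true;false];[::false;false;true;false;false;false;false];[::true;false;true;true;true;true;true]],[::0;6;1;7;2;10;3;7;2;10;1;8;0;6;4;5;0;6;1;7;2;10;1;8;0;9;2;10;1;11;2;10;1;8]);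
(1,3,3,4,[::[::true;false;false;false;true;false;false];[::false;false;false;false;false;true;false];[::false;false;false;false;false;false;true];[::false;false;false;true;false;false;false];[::false;true;true;true;true;true;true]],[::0;5;1;10;2;11;3;8;0;5;4;6;0;5;4;6;0;5;4;7;3;8;0;9;1;10;2;11]);
(1,3,4,2,[::[::false;false;true;true;true;true;true];[::false;false;true;false;false;false;false];[::false;false;false;false;false;false;true];[::false;true;true;false;true;false;true];[::true;false;true;false;false;true;false]],[::0;8;1;7;2;11;4;5;3;6;4;5;3;6;0;7;2;11;4;5;0;8;3;9;4;10;2;11;4;5]);
(1,3,5,0,[::[::false;true;true;false;false;false;false];[::false;false;false;false;false;true;false];[::true;true;true;false;false;false;true];[::false;true;true;false;false;true;true];[::false;true;true;true;true;true;true]],[::0;6;1;10;2;5;3;10;2;5;4;8;2;5;0;6;1;10;0;7;1;10;2;5;4;8;2;5;4;9;1;10;2;11]);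
(1,3,6,1,[::[::false;false;false;false;true;false;true];[::true;true;false;true;true;false;false];[::false;true;false;true;true;false;true];[::false;true;true;true;true;false;false];[::false;true;false;true;false;true;false]],[::0;11;1;5;2;11;3;7;4;10;1;5;2;6;0;11;3;7;1;8;0;9;4;10;0;11;1;5]);
(1,4,0,0,[::[::true;true;false;false;true;true;true];[::true;false;true;true;false;true;false];[::true;true;true;false;false;false;true];[::false;true;true;true;true;false;false];[::false;false;false;true;true;true;true]],[::0;6;1;8;2;5;3;6;4;8;0;5;3;6;1;7;4;8;0;9;1;10;2;11;1;7]);
(1,4,0,3,[::[::false;true;false;true;true;true;true];[::false;false;false;false;false;false;true];[::false;false;false;true;true;true;true];[::true;false;true;true;false;true;false];[::true;true;true;false;true;false;false]],[::0;6;1;11;3;5;2;9;3;8;4;5;0;6;3;7;0;8;4;9;3;10;1;11;3;5]);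
(1,4,0,6,[::[::true;true;false;false;true;true;true];[::false;false;false;false;true;false;false];[::true;true;true;false;false;false;true];[::false;false;false;true;false;false;false];[::false;false;true;true;false;true;true]],[::0;5;1;9;2;5;3;8;0;5;4;7;0;5;1;9;2;6;4;7;3;8;0;9;4;10;2;11;3;8]);
(1,4,1,1,[::[::false;false;false;false;false;true;true];[::false;false;true;false;true;true;true];[::true;true;false;true;true;false;false];[::false;true;true;true;true;false;false];[::false;false;true;true;false;true;true]],[::0;10;2;5;1;7;2;5;3;6;4;7;2;5;3;6;1;7;2;8;1;9;0;10;2;5;0;11;2;5]);
(1,4,1,4,[::[::true;false;false;true;false;false;false];[::true;true;true;false;false;false;true];[::false;false;true;false;true;true;true];[::true;false;false;true;false;true;true];[::true;true;false;false;true;true;false]],[::0;8;1;5;2;7;3;8;4;5;2;7;4;6;2;7;0;8;2;9;3;10;1;11]);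
(1,4,2,2,[::[::false;false;true;true;true;true;true];[::false;false;false;false;false;true;false];[::true;false;true;false;true;false;true];[::false;true;false;false;true;true;true];[::false;false;false;true;false;false;false]],[::0;7;1;10;2;5;3;6;4;8;2;5;3;6;0;7;4;8;2;9;1;10;2;11;1;10;2;5]);
(1,4,2,5,[::[::false;false;false;true;true;false;false];[::false;true;false;false;false;false;false];[::true;false;false;false;false;false;false];[::false;false;true;true;false;true;true];[::false;false;true;false;true;true;true]],[::0;8;1;6;2;5;3;8;4;7;2;5;1;6;3;7;0;8;4;9;3;10;0;8;4;11]);
(1,4,3,0,[::[::false;false;true;true;true;true;true];[::false;false;false;false;false;false;true];[::false;false;true;true;false;true;true];[::false;false;true;true;true;true;false];[::true;true;true;false;true;false;false]],[::0;7;1;11;3;9;2;11;3;8;4;5;0;8;4;6;0;7;1;11;3;8;4;9;2;10;1;11;4;5]);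
(1,4,3,3,[::[::true;false;false;true;true;true;true];[::true;true;false;false;false;true;true];[::true;false;false;false;false;false;false];[::false;false;false;true;false;false;false];[::true;false;true;false;true;false;true]],[::0;8;1;6;2;5;3;8;4;5;3;8;1;6;4;7;0;8;4;9;1;10;4;11;3;8;1;6]);
(1,4,4,1,[::[::true;true;false;false;true;true;true];[::true;true;false;false;true;false;true];[::true;true;true;false;false;true;false];[::true;true;false;false;false;true;true];[::false;false;false;true;false;false;false]],[::0;10;1;9;2;7;3;5;4;8;0;5;4;8;0;6;4;8;2;7;4;8;0;9;2;10;1;11;2;7]);
(1,4,5,2,[::[::false;false;false;false;true;true;false];[::true;true;true;false;false;false;true];[::true;false;true;false;true;false;true];[::true;false;true;true;true;false;false];[::true;false;true;false;true;true;false]],[::0;9;1;6;2;11;3;8;4;5;0;9;1;6;2;7;0;10;3;8;0;9;1;5;0;10;1;11]);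
(1,4,6,0,[::[::true;true;true;true;false;false;true];[::true;true;true;false;false;false;true];[::true;true;true;false;false;false;true];[::false;false;false;false;false;true;false];[::true;true;true;false;true;false;false]],[::0;8;1;5;3;10;2;5;3;10;4;5;3;10;0;6;3;10;0;7;3;10;0;8;4;9;3;10;0;11;3;10]);
(2,0,0,2,[::[::true;false;false;true;true;true;true];[::true;false;false;false;true;false;false];[::false;true;true;true;true;true;true];[::false;false;true;true;false;true;false];[::false;true;true;false;false;false;true]],[::0;8;1;5;2;6;3;8;4;6;0;5;2;6;3;7;0;8;1;9;3;10;4;11;3;7]);
(2,0,0,5,[::[::false;false;true;true;true;true;true];[::false;false;true;false;false;false;true];[::false;true;false;false;false;true;true];[::true;true;false;false;false;true;false];[::true;false;false;true;true;false;false]],[::0;8;1;7;2;11;3;6;4;5;2;6;0;7;4;8;1;7;4;9;2;10;1;11;3;5]);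
(2,0,1,0,[::[::false;false;true;false;false;false;true];[::true;false;false;true;true;true;true];[::true;true;true;true;true;false;true];[::true;true;true;true;true;true;false];[::true;true;false;false;false;true;false]],[::0;7;1;10;2;11;3;7;4;5;0;7;4;6;0;7;1;8;0;7;1;9;4;10;0;11;3;5]);
(2,0,1,3,[::[::false;true;true;false;true;true;true];[::false;false;false;false;true;true;false];[::false;false;false;true;true;false;true];[::true;true;false;true;false;false;false];[::false;false;true;false;false;true;true]],[::0;6;1;10;2;9;3;5;4;7;3;5;0;6;4;7;2;8;0;9;4;10;2;11;3;5]);
(2,0,1,6,[::[::false;false;false;true;true;false;false];[::true;true;true;false;true;false;true];[::true;false;false;true;false;true;false];[::true;true;false;false;false;false;true];[::true;false;true;false;false;true;false]],[::0;8;1;6;2;8;3;6;4;5;0;8;1;6;4;7;0;8;1;9;2;10;1;11]);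
(2,0,2,1,[::[::true;false;false;true;true;true;true];[::true;false;true;false;false;false;false];[::true;false;true;true;true;true;true];[::true;true;false;true;false;false;false];[::false;false;false;false;true;true;true]],[::0;8;1;7;3;6;2;7;3;5;4;9;1;5;4;9;3;6;1;7;0;8;4;9;1;5;4;10;1;5;4;11;1;7]);
(2,0,2,4,[::[::false;true;false;false;true;false;false];[::false;true;true;true;false;true;true];[::true;false;false;true;false;true;false];[::false;true;true;false;false;false;true];[::false;true;false;false;true;false;true]],[::0;9;1;6;2;5;3;7;4;6;2;5;0;6;2;5;1;7;2;8;0;9;1;10;3;11]);
(2,0,3,2,[::[::true;false;false;false;true;false;false];[::true;true;false;true;false;true;true];[::true;true;false;false;false;true;false];[::false;true;true;false;false;false;true];[::true;true;false;true;true;true;true]],[::0;9;1;8;2;5;3;7;4;5;3;6;0;5;3;7;1;8;0;9;1;10;3;11]);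
(2,0,4,0,[::[::false;false;true;false;false;true;false];[::false;false;true;true;true;true;true];[::false;true;true;true;true;true;true];[::false;false;true;true;true;false;false];[::true;false;false;true;false;false;true]],[::0;7;4;5;1;7;4;5;2;6;3;7;4;5;2;6;0;7;4;8;0;10;3;9;0;10;4;11]);
(2,0,4,3,[::[::true;true;true;true;false;true;false];[::false;true;false;false;true;false;false];[::false;true;true;true;true;true;true];[::false;false;true;true;false;false;true];[::false;true;true;true;false;false;false]],[::0;5;1;9;0;5;2;6;3;11;4;6;3;11;0;5;1;6;3;7;1;6;3;8;1;9;0;10;3;11]);
(2,0,5,1,[::[::false;false;false;false;false;true;true];[::true;true;true;false;true;false;true];[::true;false;true;false;true;false;false];[::true;false;true;false;true;false;false];[::true;false;true;true;true;true;true]],[::0;10;1;6;2;5;0;10;3;5;0;10;1;6;4;5;0;10;1;6;2;7;0;10;1;6;4;8;1;9;0;10;1;11;2;5]);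
(2,0,7,0,[::[::true;true;true;false;true;true;false];[::true;true;false;true;true;true;false];[::true;true;false;false;false;true;false];[::false;true;false;false;true;false;true];[::true;false;false;false;true;true;false]],[::0;7;1;8;2;5;3;6;4;5;3;6;4;5;3;11;0;7;1;8;0;9;2;10;3;11]);
(2,1,0,1,[::[::true;true;true;true;false;false;true];[::true;false;false;false;false;true;false];[::false;true;true;false;true;true;false];[::false;false;false;true;true;false;true];[::false;true;true;true;true;true;true]],[::0;6;1;5;2;6;3;8;1;5;4;6;1;5;2;6;1;5;2;7;3;8;2;9;1;10;0;11;1;10]);
(2,1,0,4,[::[::true;true;false;false;true;true;true];[::false;false;true;true;true;true;true];[::false;true;false;false;false;false;false];[::true;false;false;true;false;false;true];[::false;false;true;false;true;true;false]],[::0;5;1;7;2;6;3;5;4;7;0;5;2;6;1;7;3;8;0;9;2;6;1;10;3;11;4;7]);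
(2,1,0,7,[::[::true;false;true;true;true;false;true];[::false;false;false;false;false;true;true];[::false;false;false;true;false;false;false];[::true;true;false;false;true;false;false];[::false;true;true;false;false;true;false]],[::0;5;1;10;2;8;3;5;4;6;0;5;4;6;0;7;2;8;3;9;1;10;0;11;3;6]);
(2,1,1,2,[::[::false;true;false;false;true;false;false];[::true;false;true;true;false;true;true];[::true;false;false;false;false;false;false];[::true;true;false;true;true;true;true];[::true;false;true;true;true;true;true]],[::0;6;1;7;2;5;0;6;1;7;3;6;4;5;0;6;1;7;3;8;0;9;1;10;0;6;1;11]);
(2,1,1,5,[::[::false;false;false;false;true;true;false];[::true;false;false;true;false;false;false];[::false;true;false;true;true;false;true];[::false;true;true;false;false;false;true];[::false;false;true;false;false;true;true]],[::0;9;1;5;2;8;3;6;4;7;1;5;2;6;4;7;1;8;0;9;4;10;2;11]);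
(2,1,2,0,[::[::false;true;true;false;true;true;true];[::false;true;false;false;false;true;false];[::true;true;false;true;false;false;true];[::false;true;true;true;true;true;true];[::false;false;true;true;true;false;false]],[::0;7;1;10;2;5;3;6;4;7;2;5;0;6;4;7;2;8;0;9;1;10;2;11;4;8]);
(2,1,2,3,[::[::false;false;true;true;true;true;true];[::false;false;true;false;false;false;true];[::true;false;false;false;false;false;false];[::false;true;false;true;false;true;false];[::false;false;false;false;true;true;true]],[::0;8;1;7;2;5;3;6;4;9;2;5;3;6;0;7;3;8;4;9;3;10;1;11;2;5]);
(2,1,3,1,[::[::false;true;false;true;false;false;false];[::true;true;false;false;true;true;true];[::true;true;false;false;true;true;false];[::true;true;false;true;true;true;true];[::true;false;true;false;false;false;true]],[::0;8;1;11;2;6;4;7;3;6;4;5;0;6;4;7;0;8;1;9;0;8;1;10;4;11]);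
(2,1,3,4,[::[::false;true;false;false;true;false;false];[::true;true;true;true;true;false;false];[::true;true;true;false;false;true;false];[::true;false;true;false;false;false;true];[::true;true;true;true;false;true;true]],[::0;6;3;11;1;8;2;6;3;5;0;9;4;5;0;6;3;7;0;9;4;8;0;9;2;10;3;11]);
(2,1,4,2,[::[::false;false;true;false;false;false;true];[::false;true;true;false;true;true;true];[::false;true;false;false;false;false;false];[::true;true;true;false;false;false;false];[::false;true;true;true;true;true;true]],[::0;11;3;5;1;7;2;6;0;11;3;5;4;8;3;5;1;6;0;7;2;6;0;11;3;5;4;8;1;9;3;5;1;10;0;11;2;6]);
(2,1,5,0,[::[::true;false;true;false;true;true;true];[::false;false;true;false;false;true;false];[::true;false;true;false;true;false;true];[::true;false;true;true;true;true;true];[::true;true;false;false;true;false;false]],[::0;5;1;10;2;7;4;6;3;7;4;5;1;7;4;6;0;7;4;6;3;8;0;9;1;10;2;11;4;6]);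
(2,1,6,1,[::[::true;true;true;true;true;false;false];[::false;false;false;false;true;false;true];[::true;false;true;true;true;false;false];[::true;false;true;true;true;true;true];[::true;false;true;true;false;false;false]],[::0;5;1;11;2;5;1;11;0;6;3;9;4;5;1;11;0;6;2;7;1;9;4;8;1;9;4;5;1;11;0;6;3;10;1;11]);
(2,2,0,0,[::[::false;true;false;false;true;false;false];[::true;true;false;false;true;true;true];[::false;false;true;true;false;true;true];[::true;false;true;true;false;true;false];[::true;true;true;true;true;false;true]],[::0;6;2;7;1;5;2;11;3;10;4;5;0;6;2;7;0;6;2;8;0;9;2;10;4;11]);
(2,2,0,3,[::[::true;false;false;false;false;true;false];[::false;false;true;true;true;true;true];[::false;false;false;true;false;false;false];[::false;true;true;false;true;false;true];[::true;true;false;true;true;true;true]],[::0;5;1;7;2;8;3;7;4;5;3;6;1;7;2;8;3;9;0;10;3;11]);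
(2,2,0,6,[::[::false;true;false;false;true;false;false];[::false;false;false;false;false;true;true];[::true;true;true;false;false;false;true];[::false;false;false;true;false;false;false];[::true;false;true;true;true;true;true]],[::0;6;1;10;2;5;3;8;0;6;4;5;0;6;4;7;3;8;0;9;1;10;2;11]);
(2,2,1,1,[::[::true;true;true;false;false;true;true];[::true;false;true;true;true;false;true];[::true;true;false;true;false;true;false];[::false;false;false;false;true;false;false];[::true;false;true;true;true;true;true]],[::0;6;1;7;2;5;3;9;0;6;4;5;3;9;0;6;1;7;2;8;3;9;0;10;1;11;2;8]);
(2,2,1,4,[::[::false;true;false;false;false;true;false];[::false;true;false;true;true;true;true];[::true;false;false;false;false;false;false];[::false;false;true;false;true;true;true];[::false;false;true;true;false;false;true]],[::0;6;2;5;1;6;2;5;3;9;4;7;2;5;0;6;3;7;1;8;3;9;0;10;4;11]);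
(2,2,2,2,[::[::true;false;false;false;false;false;true];[::false;true;false;false;true;false;false];[::false;false;true;false;true;true;true];[::false;false;false;true;true;true;true];[::false;false;true;true;false;true;false]],[::0;5;1;6;2;7;3;9;4;7;0;5;1;6;2;7;3;8;1;9;4;10;0;11;1;6]);
(2,2,2,5,[::[::true;true;true;true;false;false;true];[::true;false;false;false;true;false;false];[::true;false;false;false;false;false;false];[::false;false;false;false;false;true;false];[::true;false;true;true;true;true;true]],[::0;6;1;9;2;5;3;10;0;6;4;5;3;10;0;6;4;7;1;9;0;8;1;9;3;10;0;11;1;9]);
(2,2,3,0,[::[::true;false;false;true;true;true;true];[::false;false;true;false;true;false;false];[::true;false;false;false;false;false;false];[::true;false;false;true;false;true;true];[::true;true;false;true;true;true;true]],[::0;5;1;7;2;5;1;7;3;5;1;7;4;5;1;7;4;6;1;7;0;8;1;9;3;10;1;7;0;11;1;7]);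
(2,2,3,3,[::[::false;true;false;false;true;false;false];[::false;false;true;true;true;true;true];[::false;false;true;false;false;false;false];[::true;false;true;false;false;true;true];[::false;false;true;true;false;false;true]],[::0;6;1;8;2;7;0;6;3;5;4;8;3;5;0;6;1;7;0;6;1;8;0;9;3;10;4;11]);
(2,2,4,1,[::[::true;true;false;true;false;true;true];[::true;true;false;false;true;true;true];[::true;true;false;false;false;true;true];[::false;true;false;false;false;false;false];[::true;false;true;false;true;false;false]],[::0;8;1;9;2;5;3;6;4;5;3;6;4;7;0;8;1;9;0;10;4;7;0;11;4;7]);
(2,2,5,2,[::[::true;true;true;false;true;true;false];[::true;true;true;false;true;false;true];[::true;false;false;true;false;true;true];[::true;true;true;false;true;false;false];[::false;true;true;false;true;false;false]],[::0;10;1;6;2;8;3;5;4;6;2;5;4;6;2;5;4;7;2;8;0;9;2;10;1;11]);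
(2,2,6,0,[::[::true;false;true;true;false;true;true];[::true;false;true;true;true;false;true];[::true;true;true;true;false;false;false];[::false;false;true;false;false;false;false];[::true;false;false;true;false;false;true]],[::0;10;1;9;2;5;3;7;4;5;3;7;4;11;2;6;0;7;4;8;3;7;4;11;2;6;1;9;0;10;1;11;2;6]);
(2,3,0,2,[::[::true;true;true;true;false;false;true];[::false;false;true;true;true;true;true];[::true;false;false;true;true;true;false];[::false;false;true;false;true;true;true];[::false;true;false;false;false;false;false]],[::0;5;1;7;2;5;3;7;4;6;2;5;4;6;1;7;2;8;3;9;0;5;1;10;0;11;2;9]);
(2,3,0,5,[::[::false;true;false;true;false;false;false];[::true;false;true;true;false;true;true];[::false;true;false;false;true;true;true];[::false;false;false;false;false;false;true];[::true;false;true;false;true;true;false]],[::0;6;1;5;2;6;3;11;4;5;0;6;1;7;0;8;2;9;1;10;3;11]);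
(2,3,1,0,[::[::false;false;true;true;false;false;false];[::false;false;true;true;true;true;true];[::true;true;false;false;true;true;false];[::false;true;false;true;false;true;true];[::false;true;true;false;true;false;true]],[::0;7;2;5;1;7;2;5;3;8;4;7;2;5;3;6;0;7;3;8;2;9;3;10;4;11]);
(2,3,1,3,[::[::false;false;false;true;false;false;true];[::true;false;true;false;false;false;false];[::false;true;false;false;true;true;true];[::false;false;true;false;true;true;true];[::false;true;false;true;true;true;false]],[::0;8;1;5;2;6;3;7;4;6;1;5;2;6;1;7;0;8;2;9;0;8;2;10;0;11;1;5]);
(2,3,1,6,[::[::true;true;false;true;true;true;false];[::true;false;false;false;false;true;false];[::false;true;false;false;false;false;false];[::true;false;true;false;true;false;true];[::true;false;true;true;false;false;true]],[::0;6;1;5;2;6;3;9;4;5;2;6;3;7;0;8;3;9;1;10;3;11]);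
(2,3,2,1,[::[::true;false;false;true;true;true;true];[::true;false;false;true;true;true;true];[::true;true;true;false;false;true;false];[::false;false;false;false;true;false;false];[::true;false;true;true;false;false;true]],[::0;8;2;6;1;8;2;5;3;9;4;5;3;9;2;6;4;7;0;8;3;9;2;10;4;11;2;6]);
(2,3,2,4,[::[::false;true;false;false;true;false;false];[::false;false;true;false;false;false;true];[::false;false;true;true;false;true;true];[::false;false;false;true;true;true;true];[::true;false;false;false;false;false;false]],[::0;6;1;7;0;6;2;7;3;8;4;5;0;6;1;7;3;8;0;9;2;10;1;11]);
(2,3,3,2,[::[::true;false;false;false;false;true;false];[::false;false;true;true;true;true;true];[::false;false;false;false;false;false;true];[::false;false;false;true;true;true;true];[::false;true;false;false;false;false;false]],[::0;5;1;7;2;11;0;5;3;8;4;6;0;5;4;6;1;7;3;8;0;5;1;9;0;10;2;11]);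
(2,3,4,0,[::[::false;true;true;false;true;true;true];[::false;false;true;true;true;true;true];[::true;false;false;false;false;false;false];[::false;false;true;false;true;true;true];[::false;false;true;false;false;false;false]],[::0;6;1;7;2;5;3;9;4;7;2;5;0;6;1;7;2;5;1;8;0;9;2;5;0;10;2;5;0;11;2;5]);
(2,3,4,3,[::[::true;true;false;true;true;true;false];[::false;true;false;true;false;false;false];[::true;true;false;true;false;false;true];[::true;true;true;true;false;false;false];[::true;false;false;false;true;true;true]],[::0;5;1;6;4;9;2;11;3;6;4;5;1;6;4;9;3;7;0;8;4;9;1;6;4;10;2;11]);
(2,3,5,1,[::[::false;true;true;false;true;true;true];[::false;true;true;true;true;false;true];[::true;true;false;false;true;false;true];[::false;false;true;false;false;false;false];[::false;true;true;false;true;true;false]],[::0;10;1;7;2;5;3;7;2;5;4;7;2;5;0;6;3;7;2;5;1;8;0;9;3;7;2;5;0;10;1;11;3;7;2;5]);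
(2,3,7,0,[::[::false;false;false;true;true;false;false];[::false;true;true;true;true;true;false];[::true;true;true;false;false;false;true];[::false;true;true;true;true;false;false];[::false;true;true;true;true;false;false]],[::0;8;2;5;1;8;2;5;3;8;2;5;4;8;2;5;1;6;0;8;2;7;0;8;2;5;0;9;2;5;1;10;2;11]);
(3,0,0,0,[::[::false;false;false;true;false;true;false];[::true;false;true;false;false;false;false];[::true;true;true;false;true;false;true];[::true;true;false;true;true;true;true];[::false;true;true;true;true;true;true]],[::0;8;1;5;0;8;2;7;3;5;4;6;1;5;4;6;1;7;0;8;2;9;0;10;2;11]);
(3,0,0,3,[::[::false;false;false;true;false;false;true];[::true;false;true;false;false;false;false];[::false;false;true;true;true;true;true];[::true;true;false;true;true;true;true];[::false;true;false;false;true;true;false]],[::0;8;1;5;2;7;3;5;4;6;1;5;4;6;1;7;0;8;4;9;0;8;4;10;0;11;1;5]);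
(3,0,0,6,[::[::false;true;true;true;false;true;true];[::false;false;false;true;false;false;true];[::false;false;true;false;true;false;false];[::true;false;false;false;true;false;true];[::true;true;false;false;false;true;false]],[::0;6;1;8;2;7;3;9;4;5;0;6;2;7;1;8;2;9;0;10;1;11;2;9]);
(3,0,1,1,[::[::false;false;true;true;true;true;true];[::true;true;false;false;false;false;false];[::false;false;true;false;false;false;true];[::false;true;true;true;true;true;true];[::false;false;false;true;true;true;false]],[::0;7;1;5;2;7;1;5;3;6;4;8;1;5;3;6;0;7;4;8;1;5;0;9;1;5;0;10;2;11;1;5]);
(3,0,1,4,[::[::true;true;true;false;false;true;true];[::false;false;false;true;false;false;true];[::true;false;false;false;true;false;false];[::true;false;true;false;false;true;false];[::true;true;false;true;true;true;true]],[::0;5;1;8;2;9;3;7;4;5;1;8;0;6;3;7;1;8;2;9;0;10;1;11;2;9]);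
(3,0,2,2,[::[::true;true;true;false;true;true;false];[::true;true;false;false;true;true;true];[::false;true;true;false;false;false;false];[::true;false;false;true;false;false;true];[::true;true;false;true;true;true;true]],[::0;7;1;5;2;6;3;5;2;7;4;5;2;6;3;5;2;7;3;8;0;9;2;7;1;10;3;11]);
(3,0,2,5,[::[::false;true;true;true;false;true;true];[::true;false;false;false;false;true;false];[::false;true;false;false;false;false;true];[::false;true;true;false;true;false;false];[::false;true;false;true;true;false;false]],[::0;6;1;5;2;11;3;7;4;6;1;5;0;6;1;5;0;7;4;8;3;9;0;10;2;11;1;5]);
(3,0,3,0,[::[::true;false;false;false;false;false;true];[::false;true;true;false;false;false;false];[::false;true;true;true;true;true;false];[::false;true;true;true;true;true;true];[::false;true;true;true;true;true;true]],[::0;5;1;6;0;5;2;6;0;5;3;6;0;5;4;6;0;5;1;6;0;5;1;7;0;5;2;8;0;5;2;9;0;5;2;10;0;11;1;6]);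
(3,0,3,3,[::[::false;false;false;true;false;false;true];[::true;false;false;false;false;true;false];[::true;false;false;true;true;true;true];[::true;true;false;false;true;false;false];[::true;false;true;false;false;false;true]],[::0;8;1;10;3;6;2;8;3;6;4;5;0;8;3;6;4;7;0;8;3;9;1;10;0;11;1;5]);
(3,0,4,1,[::[::false;false;false;false;false;true;true];[::false;true;false;true;false;false;false];[::false;false;true;true;true;true;true];[::true;false;false;true;true;false;false];[::false;false;false;true;false;true;true]],[::0;10;1;6;2;7;3;5;4;10;3;5;1;6;2;7;1;8;0;10;3;9;0;10;1;6;0;11;1;6]);
(3,0,5,2,[::[::true;true;false;true;true;false;true];[::false;false;false;true;true;false;false];[::true;true;true;true;true;false;false];[::true;true;false;true;true;true;true];[::true;true;false;false;false;true;false]],[::0;5;1;8;4;10;2;7;3;8;4;5;1;8;4;6;1;8;4;10;2;7;0;8;4;5;1;9;4;10;0;11;2;7]);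
(3,0,6,0,[::[::true;true;true;false;true;true;false];[::false;true;false;false;false;true;false];[::true;true;false;false;true;true;true];[::true;false;false;false;true;false;true];[::true;true;false;true;true;true;true]],[::0;5;1;6;3;11;0;7;2;6;3;11;0;7;4;5;1;6;3;11;0;7;4;8;0;9;1;10;3;11]);
(3,1,0,2,[::[::false;false;false;false;true;true;false];[::false;false;true;true;true;true;true];[::false;true;true;true;false;true;true];[::true;true;true;false;true;false;false];[::true;false;false;true;false;false;true]],[::0;9;2;6;1;9;2;8;3;6;4;5;2;6;1;7;4;8;0;9;2;10;4;11]);
(3,1,0,5,[::[::true;false;true;false;true;true;true];[::true;false;false;false;false;false;true];[::false;true;false;true;true;true;true];[::false;false;false;false;false;true;false];[::false;true;true;true;false;false;false]],[::0;7;1;5;2;6;3;10;4;6;0;5;2;6;0;7;2;8;0;9;3;10;1;11;4;6]);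
(3,1,1,0,[::[::false;false;false;false;true;false;true];[::false;false;true;true;true;true;true];[::true;true;true;true;false;true;false];[::false;true;false;false;false;false;false];[::false;true;true;true;true;true;true]],[::0;9;2;5;1;9;2;5;3;6;0;9;2;5;4;9;2;5;3;6;1;7;0;9;2;8;0;9;2;10;0;11;2;5]);
(3,1,1,3,[::[::false;false;false;false;true;true;false];[::true;false;false;true;true;true;true];[::false;true;false;false;false;false;true];[::false;false;true;false;false;false;false];[::false;true;true;true;true;true;true]],[::0;9;2;6;1;5;2;6;3;7;1;5;4;6;1;5;2;6;3;7;1;8;0;9;2;6;0;10;2;11]);
(3,1,1,6,[::[::true;false;true;false;false;false;false];[::true;true;false;true;true;true;false];[::true;true;true;false;false;true;true];[::false;false;false;false;false;false;true];[::true;false;false;true;true;false;false]],[::0;7;1;8;2;5;3;11;4;5;3;11;1;6;0;7;1;8;0;7;1;9;2;10;3;11]);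
(3,1,2,1,[::[::true;false;false;true;true;true;true];[::true;true;true;false;false;true;true];[::false;false;false;true;true;false;false];[::true;false;false;false;false;false;false];[::true;false;true;true;true;true;true]],[::0;8;1;5;2;8;3;5;2;8;1;6;4;5;2;8;1;6;4;7;0;8;1;5;2;9;1;10;2;8;1;11;2;8;1;6]);
(3,1,2,4,[::[::false;false;false;false;true;false;true];[::true;true;true;true;false;false;true];[::false;true;false;false;false;true;false];[::false;true;false;false;false;false;false];[::false;true;true;true;true;true;true]],[::0;9;1;5;2;10;3;6;0;9;1;5;4;9;1;5;2;6;0;9;1;7;0;9;1;8;0;9;2;10;0;11;2;6]);
(3,1,3,2,[::[::true;true;true;true;true;false;false];[::true;false;true;true;false;true;true];[::true;false;true;false;true;true;true];[::false;false;false;false;false;false;true];[::true;false;true;false;false;true;false]],[::0;6;1;8;2;5;3;11;4;5;3;11;0;6;1;7;3;11;0;8;2;9;1;10;3;11]);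
(3,1,4,0,[::[::true;false;false;false;false;false;true];[::true;true;false;false;true;true;true];[::true;true;true;false;true;true;false];[::false;true;false;false;false;false;false];[::true;true;false;true;true;true;true]],[::0;11;2;7;1;11;2;5;3;6;0;11;2;7;4;5;3;6;0;11;2;7;4;8;1;9;0;11;2;10;0;11;2;6]);
(3,1,4,3,[::[::false;true;true;false;false;false;false];[::false;false;false;true;false;false;true];[::false;true;true;false;true;true;true];[::true;true;true;false;true;false;false];[::false;true;true;false;false;true;false]],[::0;6;1;8;2;10;3;5;4;10;3;5;0;6;1;8;0;7;1;8;2;9;4;10;1;11]);
(3,1,5,1,[::[::true;true;false;false;false;false;false];[::true;true;false;false;false;false;false];[::false;false;true;false;false;false;true];[::true;true;false;false;false;true;true];[::true;true;false;true;true;true;true]],[::0;5;2;7;1;5;2;7;3;5;2;7;4;5;2;7;0;6;2;7;4;8;2;7;4;9;3;10;2;11]);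
(3,1,7,0,[::[::false;false;true;false;true;false;false];[::true;true;true;true;true;false;false];[::true;false;false;false;false;false;true];[::true;false;true;false;true;true;false];[::true;false;true;false;true;false;false]],[::0;7;2;11;1;6;2;11;3;10;4;5;0;7;2;11;1;6;0;7;2;11;1;8;0;9;2;11;3;10;2;11]);
(3,2,0,1,[::[::false;true;false;true;true;true;true];[::true;false;true;true;true;false;true];[::false;true;true;false;true;true;true];[::true;true;false;true;false;true;false];[::false;false;true;false;false;false;false]],[::0;6;1;5;2;7;3;5;4;7;3;5;0;6;1;7;0;8;2;9;3;10;1;11;3;5]);
(3,2,0,4,[::[::true;false;true;false;true;true;true];[::false;true;false;true;true;true;true];[::false;false;false;false;true;false;true];[::true;true;true;false;false;true;false];[::false;false;false;true;false;false;false]],[::0;5;1;6;2;9;3;5;4;8;0;5;1;6;0;7;1;8;0;9;3;10;2;11;3;6]);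
(3,2,0,7,[::[::false;false;false;false;true;false;true];[::true;false;false;false;false;true;false];[::true;true;true;true;false;true;false];[::false;true;false;true;true;false;true];[::false;false;true;false;false;false;false]],[::0;9;1;5;0;9;2;5;3;6;4;7;1;5;3;6;4;7;3;8;0;9;1;10;0;11;1;5]);
(3,2,1,2,[::[::false;false;true;true;true;true;true];[::false;true;false;true;true;true;true];[::true;false;false;false;false;false;true];[::false;false;true;true;true;true;false];[::false;true;false;false;false;false;false]],[::0;7;1;6;2;5;3;7;4;6;2;5;1;6;0;7;1;8;2;5;0;9;2;5;0;10;2;11;4;6]);
(3,2,1,5,[::[::true;true;false;false;true;true;true];[::true;false;true;false;true;true;true];[::true;true;true;true;false;false;true];[::true;false;false;false;false;false;false];[::false;false;false;true;false;false;false]],[::0;6;1;9;2;6;3;5;4;8;0;5;4;8;0;6;1;7;4;8;0;9;2;6;1;10;2;11;4;8]);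
(3,2,2,0,[::[::true;false;true;true;true;false;true];[::false;false;true;true;true;true;true];[::false;false;true;true;true;true;true];[::false;false;false;false;false;true;false];[::false;true;false;false;false;false;false]],[::0;5;1;7;4;6;2;7;3;10;4;6;0;5;4;6;0;7;3;10;0;8;3;10;0;9;3;10;0;11;3;10]);
(3,2,2,3,[::[::true;true;true;true;false;true;false];[::true;false;true;false;true;true;true];[::true;false;false;true;true;true;true];[::true;false;false;false;false;false;false];[::false;false;false;false;false;false;true]],[::0;6;1;7;2;8;3;5;4;11;0;5;4;11;0;6;1;7;2;8;1;9;0;10;4;11]);
(3,2,3,1,[::[::true;false;false;true;true;true;true];[::true;true;false;false;true;true;true];[::true;false;false;true;true;true;true];[::false;false;true;false;false;false;false];[::true;false;false;false;false;false;false]],[::0;8;1;6;2;5;3;7;4;5;3;7;1;6;3;7;0;8;1;9;3;7;0;10;3;7;0;11;3;7]);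
(3,2,3,4,[::[::false;false;true;true;true;true;true];[::true;false;true;true;true;false;true];[::false;true;true;false;false;false;false];[::false;false;false;false;false;true;false];[::false;false;true;false;false;false;false]],[::0;10;1;5;2;6;3;10;4;7;3;10;1;5;2;6;0;7;3;10;1;8;2;6;0;9;3;10;1;11;2;6]);
(3,2,4,2,[::[::false;true;false;true;false;false;false];[::true;false;false;true;true;true;true];[::false;false;false;true;false;false;true];[::false;false;true;true;false;true;true];[::false;false;false;false;true;false;false]],[::0;6;1;5;2;8;4;9;3;7;4;9;0;6;1;5;0;6;3;7;0;8;4;9;3;10;2;11]);
(3,2,5,0,[::[::true;false;true;false;true;true;true];[::false;false;true;true;true;true;true];[::false;false;true;false;false;false;true];[::false;false;false;false;true;false;false];[::false;true;true;false;true;true;false]],[::0;5;1;8;2;7;3;9;2;11;4;6;0;5;4;6;0;7;3;9;2;11;4;6;1;8;0;9;2;11;4;10;2;11;4;6]);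
(3,2,6,1,[::[::false;false;false;true;true;false;false];[::true;false;false;true;false;false;false];[::true;false;true;true;false;true;true];[::true;true;false;true;false;false;true];[::true;false;false;false;false;false;false]],[::0;9;1;5;0;9;2;7;3;6;4;5;0;9;3;6;2;7;0;8;4;5;0;9;2;10;3;11]);
(4,0,0,1,[::[::false;true;true;true;true;true;false];[::false;true;true;true;true;false;true];[::true;false;true;false;true;true;true];[::true;false;false;false;false;true;false];[::false;true;false;true;false;false;true]],[::0;10;1;6;2;7;3;5;4;6;2;5;0;6;2;7;4;8;2;9;3;10;1;11]);
(4,0,0,4,[::[::false;false;true;false;false;false;true];[::false;true;false;false;true;false;false];[::false;false;true;true;true;true;true];[::true;true;false;false;true;true;true];[::true;false;false;true;false;true;false]],[::0;7;1;6;2;7;3;6;4;5;1;6;0;7;4;8;1;9;4;10;0;11;1;6]);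
(4,0,0,7,[::[::true;false;true;false;false;false;false];[::false;false;false;false;false;true;true];[::true;true;true;true;false;true;false];[::false;true;false;false;true;false;false];[::false;false;false;true;true;false;true]],[::0;5;1;11;2;5;3;6;4;8;0;5;3;6;0;7;4;8;3;9;1;10;4;11]);
(4,0,1,2,[::[::true;true;true;true;false;true;false];[::false;false;false;true;false;false;true];[::true;false;false;false;true;false;false];[::true;false;true;false;true;true;true];[::true;true;false;true;true;true;true]],[::0;5;1;8;2;5;1;8;3;7;4;5;1;11;0;6;3;7;1;8;2;9;0;10;1;11]);
(4,0,1,5,[::[::true;false;false;false;false;false;true];[::false;false;true;true;false;false;false];[::true;false;false;false;true;false;false];[::true;true;false;false;true;true;true];[::true;true;true;true;false;true;true]],[::0;5;1;7;2;5;1;7;3;9;4;5;1;7;3;6;1;7;0;5;1;8;2;9;4;10;0;11;1;7]);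
(4,0,2,0,[::[::true;false;true;false;false;false;false];[::false;false;false;false;true;true;false];[::false;false;false;true;false;false;true];[::false;false;true;true;true;true;true];[::false;true;true;true;true;true;true]],[::0;5;1;9;2;8;0;5;3;8;0;5;4;6;0;5;4;6;0;7;2;8;1;9;0;5;1;10;2;11]);
(4,0,2,3,[::[::false;false;false;false;true;true;false];[::true;true;true;true;false;false;true];[::true;true;false;false;true;true;true];[::true;true;false;false;false;false;false];[::true;true;true;true;false;true;true]],[::0;9;1;7;2;9;3;5;0;9;4;5;0;9;1;6;0;9;1;7;0;9;1;8;0;9;4;10;1;11]);
(4,0,3,1,[::[::false;false;true;true;true;true;true];[::true;false;true;false;false;false;false];[::false;true;false;false;true;false;false];[::false;false;true;true;true;true;true];[::false;false;true;false;false;true;true]],[::0;8;1;5;2;6;3;8;4;10;1;5;2;6;0;7;2;6;0;8;2;9;4;10;1;5;0;11;1;5]);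
(4,0,3,4,[::[::false;false;true;true;false;false;false];[::false;false;true;false;true;false;false];[::false;true;false;false;false;false;true];[::false;false;true;true;true;true;true];[::true;false;true;false;false;true;false]],[::0;8;1;7;2;6;3;8;4;5;2;6;0;7;2;6;0;8;1;9;4;10;2;11]);
(4,0,4,2,[::[::true;true;false;true;true;false;true];[::true;false;false;false;false;true;false];[::true;false;false;true;true;true;true];[::false;false;true;true;false;false;false];[::true;false;false;true;false;false;true]],[::0;6;1;5;3;7;2;5;3;7;4;5;3;7;0;6;3;7;0;8;1;10;0;9;1;10;0;11;1;10]);
(4,0,5,0,[::[::false;true;false;false;true;false;false];[::false;true;true;false;true;true;true];[::true;true;true;false;true;false;true];[::false;false;true;false;false;true;false];[::false;true;true;true;true;true;true]],[::0;6;3;10;2;5;1;10;2;5;3;10;2;5;4;8;2;5;0;6;3;7;0;6;3;10;2;5;4;8;0;9;3;10;2;11]);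
(4,0,6,1,[::[::true;false;true;true;false;true;true];[::false;false;true;false;true;false;false];[::false;false;false;true;false;true;false];[::false;true;true;true;false;true;true];[::false;false;true;true;false;true;false]],[::0;5;1;7;2;8;1;9;3;6;4;8;1;9;0;5;3;6;0;7;2;8;1;9;0;10;1;9;0;11;1;9]);
(4,1,0,0,[::[::true;true;true;false;false;true;true];[::true;false;false;true;true;true;true];[::true;true;true;true;true;false;false];[::false;true;true;true;true;false;true];[::false;false;false;false;false;true;false]],[::0;6;1;10;2;5;3;6;4;10;2;5;3;6;1;5;3;7;1;8;0;5;3;9;0;10;3;11;2;8]);
(4,1,0,3,[::[::false;true;true;true;true;true;false];[::true;false;false;true;true;true;true];[::false;true;true;true;true;false;true];[::true;false;false;false;false;true;false];[::false;false;false;false;false;false;true]],[::0;6;1;5;2;6;3;5;4;11;3;5;0;6;1;5;0;7;1;8;3;5;0;9;3;10;2;11]);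
(4,1,0,6,[::[::false;true;true;false;true;true;true];[::true;true;false;false;false;false;false];[::false;false;true;false;false;false;true];[::true;false;false;true;true;true;true];[::false;false;false;true;false;false;false]],[::0;7;1;5;2;7;3;5;4;8;1;5;0;6;2;7;3;8;0;9;1;5;0;10;2;11;1;5]);
(4,1,1,1,[::[::false;false;false;false;true;false;true];[::true;true;true;true;false;true;false];[::false;false;true;true;true;true;true];[::false;false;true;true;true;true;true];[::false;true;false;false;false;false;false]],[::0;9;1;5;2;7;4;6;3;7;4;6;0;9;1;5;4;6;2;7;0;9;1;8;0;9;1;10;0;11;1;5]);
(4,1,1,4,[::[::false;true;true;false;false;false;false];[::true;false;false;true;true;true;true];[::false;false;false;false;true;true;false];[::false;true;true;true;false;true;true];[::false;false;false;false;false;false;true]],[::0;6;1;5;2;9;3;6;4;11;0;6;1;5;0;6;1;5;0;7;1;8;2;9;3;10;4;11]);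
(4,1,2,2,[::[::false;true;false;false;false;false;true];[::false;true;true;false;true;true;true];[::false;true;false;true;true;true;true];[::true;true;true;true;true;false;false];[::false;false;false;false;false;true;false]],[::0;11;3;5;1;7;2;10;3;5;4;10;3;5;0;6;4;10;3;7;2;8;1;9;4;10;0;11;3;5]);
(4,1,2,5,[::[::false;true;true;false;true;true;true];[::false;true;false;false;false;false;true];[::true;false;false;true;false;false;false];[::false;true;false;false;true;false;false];[::false;true;true;true;false;true;false]],[::0;7;1;6;2;5;3;9;4;6;2;5;0;6;2;5;0;7;2;8;0;9;4;10;1;11;2;5]);
(4,1,3,0,[::[::true;false;false;true;true;true;true];[::false;false;false;true;false;true;false];[::false;true;false;true;true;true;true];[::false;false;true;false;true;false;false];[::false;false;false;false;false;false;true]],[::0;5;1;8;3;7;2;6;3;7;4;11;3;7;0;5;2;6;3;7;0;8;3;9;1;10;4;11;3;7]);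
(4,1,3,3,[::[::true;false;true;true;false;true;true];[::true;false;true;false;true;true;true];[::true;true;true;true;false;false;true];[::true;false;true;false;false;false;false];[::false;false;false;false;true;false;false]],[::0;8;1;9;2;6;3;5;4;9;0;5;4;9;2;6;0;7;4;9;0;8;1;9;0;10;2;11;4;9]);
(4,1,4,1,[::[::false;false;false;true;false;false;true];[::true;true;false;true;false;true;true];[::true;true;false;true;false;true;true];[::true;true;false;true;true;true;false];[::true;true;true;false;true;false;false]],[::0;8;4;7;1;8;4;7;2;11;3;8;4;5;0;8;4;6;0;8;4;7;0;8;4;9;1;10;0;11;3;5]);
(4,1,5,2,[::[::true;true;true;false;true;true;false];[::false;false;false;true;true;false;false];[::true;true;true;false;true;true;false];[::true;true;true;false;true;false;true];[::true;true;true;false;false;false;true]],[::0;5;1;8;2;10;3;9;4;5;1;8;0;6;1;8;0;7;1;8;0;9;4;11;0;10;3;11]);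
(4,1,6,0,[::[::false;false;false;false;false;true;true];[::true;false;true;true;true;false;true];[::true;false;true;false;false;false;false];[::true;false;true;false;false;false;false];[::true;true;true;false;false;false;true]],[::0;10;1;8;2;5;0;10;3;5;0;10;4;5;0;10;4;6;1;7;0;10;1;8;0;10;1;9;0;10;1;11;2;5]);
(5,0,0,2,[::[::true;false;true;false;false;false;false];[::true;true;false;true;true;true;false];[::false;true;true;true;false;true;true];[::false;false;false;false;true;false;true];[::false;false;true;true;true;true;true]],[::0;7;1;5;2;6;3;9;0;5;4;7;1;5;2;6;0;7;1;8;3;9;2;10;3;11]);
(5,0,0,5,[::[::false;true;true;false;true;true;true];[::false;false;false;true;false;false;true];[::true;false;true;false;false;false;false];[::true;true;false;true;false;true;true];[::false;false;false;false;true;true;false]],[::0;6;1;8;2;7;3;5;4;9;2;5;0;6;2;7;1;8;0;9;3;10;1;11;2;5]);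
(5,0,1,0,[::[::false;true;false;false;false;false;true];[::false;true;true;true;true;true;false];[::false;false;false;true;false;true;false];[::true;false;true;true;true;false;true];[::false;true;true;false;true;true;true]],[::0;11;1;6;2;10;3;5;4;6;3;5;0;6;3;7;2;8;4;9;2;10;0;11;1;7]);
(5,0,1,3,[::[::true;true;false;true;true;false;true];[::false;false;true;false;false;false;true];[::true;false;false;true;true;true;true];[::true;false;false;false;false;true;false];[::true;true;true;false;true;true;false]],[::0;5;1;7;2;8;3;5;1;11;4;5;1;7;0;6;1;7;0;8;4;9;3;10;0;11;3;10]);
(5,0,1,6,[::[::false;true;false;false;false;true;false];[::false;false;false;false;true;false;true];[::true;false;false;true;false;false;false];[::false;false;true;false;false;false;true];[::false;true;true;true;true;true;false]],[::0;6;1;9;2;5;3;11;4;6;2;5;0;6;3;7;2;8;1;9;0;10;1;11]);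
(5,0,2,1,[::[::false;true;false;true;true;true;true];[::false;false;true;false;false;false;true];[::false;false;true;true;true;true;true];[::true;false;false;false;false;true;false];[::false;false;false;true;true;false;false]],[::0;6;1;7;0;6;2;7;3;5;4;8;3;5;0;6;1;7;0;8;1;7;0;9;3;10;1;11;3;5]);
(5,0,2,4,[::[::false;false;false;true;false;false;true];[::true;false;true;false;true;true;true];[::true;false;true;true;false;true;true];[::true;false;false;false;true;false;false];[::true;true;false;false;false;false;false]],[::0;8;1;9;2;7;3;9;4;5;0;8;4;6;1;7;0;8;1;9;2;10;0;11;3;5]);
(5,0,3,2,[::[::true;false;false;false;false;false;true];[::false;false;true;true;true;true;true];[::false;false;true;true;true;true;true];[::false;false;true;false;false;true;false];[::false;true;true;false;false;false;false]],[::0;5;1;7;0;5;2;8;3;10;4;6;0;5;4;6;1;7;0;5;1;8;0;5;1;9;3;10;0;11;3;7]);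
(5,0,4,0,[::[::true;true;false;false;false;false;false];[::false;false;false;true;false;false;true];[::false;true;false;true;true;true;true];[::false;true;true;true;true;true;false];[::false;true;false;true;true;true;true]],[::0;5;1;8;0;5;2;11;3;7;4;8;0;5;2;6;1;11;3;7;1;8;0;5;2;9;0;5;2;10;1;11]);
(5,0,4,3,[::[::false;true;false;true;true;true;true];[::false;true;false;true;false;false;false];[::true;true;false;true;false;true;true];[::false;false;true;true;false;false;false];[::false;true;false;false;true;false;false]],[::0;9;1;6;3;7;2;5;3;7;4;9;2;5;0;6;3;7;0;8;4;9;2;10;3;7;0;11;3;7]);
(5,0,5,1,[::[::false;true;true;false;true;true;true];[::false;true;true;false;false;false;false];[::false;true;true;false;false;false;false];[::true;true;true;true;false;false;true];[::false;false;false;false;false;true;true]],[::0;9;1;6;4;10;2;6;4;10;3;5;4;10;3;5;0;6;4;10;1;7;4;10;3;8;0;9;4;10;3;11;1;6;4;10;3;5]);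
(5,0,7,0,[::[::true;true;true;false;true;true;false];[::true;true;true;false;true;true;false];[::false;false;false;true;false;false;true];[::true;true;true;false;true;true;false];[::true;true;true;false;true;true;false]],[::0;5;2;8;1;5;2;8;3;5;2;8;4;5;2;8;0;6;2;8;0;7;2;8;0;9;2;8;0;10;2;11])].
Definition lookupW (c0 c1 d0 d1 : nat) : seq (seq bool) * seq nat :=
  let fix go (l : seq (nat * nat * nat * nat * seq (seq bool) * seq nat)) :=
    match l with
    | [::] => ([::], [::])
    | (a0,a1,b0,b1,M,cy) :: l' =>
        if [&& a0 == c0, a1 == c1, b0 == d0 & b1 == d1] then (M, cy) else go l'
    end in go wtable.
Definition DWn (M : seq (seq bool)) (i j : nat) : bool :=
  if (i < 5) && (5 <= j) then nth false (nth [::] M i) (j - 5)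
  else if (5 <= i) && (j < 5) then ~~ nth false (nth [::] M j) (i - 5) else false.
Definition canon_n (c0 c1 d0 d1 i : nat) : nat :=
  if i < 5 then (if i < c0 then 0 else if i < c0 + c1 then 1 else 2)
  else (if i - 5 < d0 then 0 else if i - 5 < d0 + d1 then 1 else 2).
Definition outn M i := count (fun j => DWn M i j) (iota 0 12).
Definition inn M i := count (fun j => DWn M j i) (iota 0 12).
Definition cycn M (c : seq nat) := if c is x :: p then path (DWn M) x (rcons p x) else false.
Definition goodn (c0 c1 d0 d1 : nat) : bool :=
  let (M, cy) := lookupW c0 c1 d0 d1 in
  [&& all (fun i => (outn M i + 2 * inn M i) %% 3 == canon_n c0 c1 d0 d1 i) (iota 0 12),
      cycn M cy, all (fun i => i \in cy) (iota 0 12) & all (fun i => i < 12) cy].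
Definition allcheck : bool :=
  all (fun c0 => all (fun c1 => all (fun d0 => all (fun d1 =>
     (c0 + c1 <= 5) ==> (d0 + d1 <= 7) ==>
     (sumn (map (canon_n c0 c1 d0 d1) (iota 0 12)) %% 3 == 0) ==> goodn c0 c1 d0 d1)
   (iota 0 8)) (iota 0 8)) (iota 0 6)) (iota 0 6).
Lemma allcheckP : allcheck.
Proof. vm_compute. reflexivity. Qed.

Lemma check_spec c0 c1 d0 d1 : (c0 + c1 <= 5) -> (d0 + d1 <= 7) ->
  sumn (map (canon_n c0 c1 d0 d1) (iota 0 12)) %% 3 = 0 -> goodn c0 c1 d0 d1.
Proof.
move=> h1 h2 h3.
have hc0 : c0 \in iota 0 6 by rewrite mem_iota; lia.
have hc1 : c1 \in iota 0 6 by rewrite mem_iota; lia.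
have hd0 : d0 \in iota 0 8 by rewrite mem_iota; lia.
have hd1 : d1 \in iota 0 8 by rewrite mem_iota; lia.
move: allcheckP => /allP /(_ c0 hc0) /allP /(_ c1 hc1) /allP /(_ d0 hd0) /allP /(_ d1 hd1).
by rewrite h1 h2 h3 eqxx.
Qed.

Lemma DWn_K M i j : DWn M i j -> (i < 5) != (j < 5).
Proof. rewrite /DWn; case: ltnP => hi; case: ltnP => hj //=; case: ltnP => // hj'; lia. Qed.

Lemma DWn_xor M i j : (i < 5) != (j < 5) -> DWn M i j (+) DWn M j i.
Proof.
rewrite /DWn; case: (ltnP i 5) => hi; case: (ltnP j 5) => hj //= _.
- by case: (nth false _ _).
- by case: (nth false _ _).
Qed.

Local Open Scope ring_scope.

Definition canon3 (a b i : nat) : nat := if (i < a)%N then 0%N else if (i < a + b)%N then 1%N else 2%N.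

Lemma split3 (V : finType) (X : {set V}) (beta : V -> 'Z_3) (x0 : V) :
  let X0 := [set x in X | beta x == 0] in
  let X1 := [set x in X | beta x == 1] in
  let X2 := [set x in X | (beta x != 0) && (beta x != 1)] in
  let sX := enum X0 ++ enum X1 ++ enum X2 in
  [/\ uniq sX, sX =i X, size sX = #|X| &
      forall i, (i < size sX)%N -> beta (nth x0 sX i) = (canon3 #|X0| #|X1| i)%:R].
Proof.
move=> X0 X1 X2 sX.
have m0 y : (y \in enum X0) = (y \in X) && (beta y == 0) by rewrite mem_enum inE.
have m1 y : (y \in enum X1) = (y \in X) && (beta y == 1) by rewrite mem_enum inE.
have m2 y : (y \in enum X2) = (y \in X) && (beta y != 0) && (beta y != 1) by rewrite mem_enum inE andbA.
have u : uniq sX.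
  rewrite /sX !cat_uniq !enum_uniq /= !andbT; apply/andP; split.
  - apply/hasPn => y; rewrite mem_cat m1 m2 /= m0 => /orP[/andP[_ /eqP ->] | /andP[/andP[_ h] _]].
      by rewrite andbF.
    by rewrite (negPf h) andbF.
  - by apply/hasPn => y; rewrite m2 m1 => /andP[/andP[_ _] /negPf ->]; rewrite andbF.
have mem : sX =i X.
  move=> y; rewrite /sX !mem_cat m0 m1 m2.
  by case: (y \in X) => //=; case: (beta y == 0); case: (beta y == 1).
have sz : size sX = #|X|.
  by rewrite -(elimT card_uniqP u); apply: eq_card.
split => // i hi.
rewrite /sX /canon3 nth_cat -cardE.
case: ltnP => h0.
  by have := mem_nth x0 (_ : (i < size (enum X0))%N); rewrite -cardE => /(_ h0); rewrite m0 => /andP[_ /eqP ->].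
rewrite nth_cat -cardE.
case: ltnP => h1.
  have h1' : (i - #|X0| < size (enum X1))%N by rewrite -cardE; lia.
  have := mem_nth x0 h1'; rewrite m1 => /andP[_ /eqP ->].
  by rewrite ifT //; lia.
rewrite ifF; last by lia.
have h2' : (i - #|X0| - #|X1| < size (enum X2))%N.
  move: hi; rewrite /sX !size_cat -!cardE; lia.
have := mem_nth x0 h2'; rewrite m2 => /andP[/andP[_ b0] b1].
by move: b0 b1; case: (Z3_cases (beta (nth x0 (enum X2) (i - #|X0| - #|X1|)))) => ->; rewrite ?eqxx.
Qed.

Lemma split3' (V : finType) (X : {set V}) (beta : V -> 'Z_3) (x0 : V) :
  exists sX a b, [/\ uniq sX, sX =i X, size sX = #|X|, (a + b <= #|X|)%N &
      forall i, (i < size sX)%N -> beta (nth x0 sX i) = (canon3 a b i)%:R].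
Proof.
have [u m sz h] := split3 X beta x0.
do 3 eexists; split; [exact: u | exact: m | exact: sz | | exact: h].
by rewrite -sz !size_cat -!cardE; lia.
Qed.

Lemma Z3_sub (a b : nat) : (a%:R - b%:R : 'Z_3) = (a + 2 * b)%N%:R.
Proof.
rewrite natrD natrM; apply/eqP; rewrite -subr_eq0.
have -> : forall x y : 'Z_3, x - y - (x + 2%:R * y) = - (3%:R * y) by move=> x y; ring.
by rewrite Z3_three mul0r oppr0.
Qed.

Lemma card_idx (V : finType) (s : seq V) (x0 : V) (Pr : pred nat) : uniq s ->
  #|[set w | (w \in s) && Pr (index w s)]| = count Pr (iota 0 (size s)).
Proof.
move=> us.
pose L := [seq nth x0 s j | j <- iota 0 (size s) & Pr j].
have hL : uniq L.
  rewrite map_inj_in_uniq ?filter_uniq ?iota_uniq //.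
  move=> a b; rewrite !mem_filter !mem_iota /= => /andP[_ ha] /andP[_ hb] e.
  by rewrite -(index_uniq x0 ha us) -(index_uniq x0 hb us) e.
rewrite -size_filter -(size_map (nth x0 s)) -(elimT card_uniqP hL).
apply: eq_card => w; rewrite inE; apply/andP/mapP.
- move=> [ws pw]; exists (index w s); last by rewrite nth_index.
  by rewrite mem_filter pw mem_iota /= index_mem.
- move=> [j]; rewrite mem_filter mem_iota /= => /andP[pj hj] ->.
  by rewrite mem_nth // index_uniq.
Qed.

Definition eK (V : finType) (P Q : {set V}) : rel V :=
  fun u w => ((u \in P) && (w \in Q)) || ((u \in Q) && (w \in P)).

Lemma base_S3 (V : finType) (P Q : {set V}) :
  [disjoint P & Q] -> #|P| = 5%N -> #|Q| = 7%N -> S3on (eK P Q) (P :|: Q).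
Proof.
move=> dPQ cP cQ beta hsum.
have [x0 _] : exists x0, x0 \in P by apply/set0Pn; rewrite -card_gt0 cP.
have [sP [c0 [c1 [uP mP szP lc bP]]]] := split3' P beta x0.
have [sQ [d0 [d1 [uQ mQ szQ ld bQ]]]] := split3' Q beta x0.
pose s := sP ++ sQ.
have us : uniq s.
  rewrite cat_uniq uP uQ /= andbT; apply/hasPn => y; rewrite mQ mP => yQ.
  by rewrite (disjointFl dPQ yQ).
have ms : s =i P :|: Q by move=> y; rewrite mem_cat mP mQ inE.
have szs : size s = 12%N by rewrite size_cat szP szQ cP cQ.
have inP i : (i < 12)%N -> (nth x0 s i \in P) = (i < 5)%N.
  move=> hi; rewrite nth_cat szP cP; case: ltnP => h.
    by rewrite -mP mem_nth // szP cP.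
  have : nth x0 sQ (i - 5) \in Q by rewrite -mQ mem_nth // szQ cQ; lia.
  exact: disjointFl dPQ.
have bs i : (i < 12)%N -> beta (nth x0 s i) = (canon_n c0 c1 d0 d1 i)%:R.
  move=> hi; rewrite nth_cat szP cP /canon_n; case: ltnP => h.
    by rewrite bP // szP cP.
  by rewrite bQ // szQ cQ; lia.
have hsum' : (sumn (map (canon_n c0 c1 d0 d1) (iota 0 12)) %% 3 = 0)%N.
  have : \sum_(u <- s) beta u = 0.
    by rewrite (big_uniq _ us) -[RHS]hsum; apply: eq_bigl => y; rewrite ms.
  rewrite (big_nth x0) szs big_nat_cond.
  rewrite (eq_bigr (fun i => (canon_n c0 c1 d0 d1 i)%:R)); last first.
    by move=> i; rewrite andbT => /andP[_ hi]; rewrite bs.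
  rewrite -big_nat_cond -natr_sum sumnE big_map -/(index_iota 0 12) => /(congr1 val).
  by rewrite /= val_Zp_nat.
rewrite cP in lc; rewrite cQ in ld.
have := check_spec lc ld hsum'.
rewrite /goodn; case: (lookupW c0 c1 d0 d1) => M cy /and4P[hdeg hcyc hall hlt].
pose D u w := [&& u \in s, w \in s & DWn M (index u s) (index w s)].
have iuP u : u \in s -> (u \in P) = (index u s < 5)%N.
  move=> us'; have hi : (index u s < 12)%N by rewrite -szs index_mem.
  by rewrite -(inP _ hi) nth_index.
have qP u : u \in P :|: Q -> (u \in Q) = ~~ (u \in P).
  move=> hu; case: (boolP (u \in P)) => hp; first by rewrite (disjointFr dPQ hp).
  by move: hu; rewrite inE (negPf hp).
have eKi u w : u \in s -> w \in s -> eK P Q u w = ((index u s < 5)%N != (index w s < 5)%N).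
  move=> us' ws'; rewrite /eK !qP -?ms // -!iuP //.
  by case: (u \in P); case: (w \in P).
exists D; split.
- move=> u w /and3P[us' ws' d]; rewrite -!ms us' ws' /= eKi //.
  exact: DWn_K d.
- move=> u w; rewrite -!ms => us' ws'; rewrite eKi // => k.
  by rewrite /D us' ws' /=; apply: DWn_xor.
- have hom : {in [pred i | (i < 12)%N] &, {homo nth x0 s : a b / DWn M a b >-> D a b}}.
    move=> a b ha hb hab; rewrite /D !mem_nth ?szs //= !index_uniq ?szs //.
  have hc : cycle D (map (nth x0 s) cy).
    apply: (homo_cycle_in hom) => //.
    by case: cy hcyc {hall hlt} => //.
  have := connect_cycle hc => hcon u w; rewrite -!ms => us' ws'.
  have hu : (index u s < 12)%N by rewrite -szs index_mem.
  have hw : (index w s < 12)%N by rewrite -szs index_mem.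
  rewrite -(nth_index x0 us') -(nth_index x0 ws'); apply: hcon; apply: map_f.
  + by move/allP: hall; apply; rewrite mem_iota.
  + by move/allP: hall; apply; rewrite mem_iota.
- move=> u; rewrite -ms => us'.
  have hi : (index u s < 12)%N by rewrite -szs index_mem.
  have eo : outdeg D u = count (fun j => DWn M (index u s) j) (iota 0 12).
    rewrite /outdeg -szs -(card_idx x0 _ us); apply: eq_card => w.
    by rewrite !inE /D us'.
  have ei : indeg D u = count (fun j => DWn M j (index u s)) (iota 0 12).
    rewrite /indeg -szs -(card_idx x0 _ us); apply: eq_card => w.
    by rewrite !inE /D us' /=.
  have c3 : (canon_n c0 c1 d0 d1 (index u s) < 3)%N by rewrite /canon_n; repeat case: ifP.
  move/allP: hdeg => /(_ (index u s)); rewrite mem_iota /= => /(_ hi) /eqP hd.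
  rewrite eo ei Z3_sub -{3}(nth_index x0 us') bs //; apply: Z3_eq.
  by rewrite hd modn_small.
Qed.

End Part4.

Section Part5.
Set Implicit Arguments. Unset Strict Implicit. Unset Printing Implicit Defensive.

Lemma cut_pairs (V : finType) (e : rel V) (S : {set V}) :
  cut_size e S = \sum_a \sum_b ((a \in S) && (b \notin S) && e a b : nat).
Proof.
rewrite /cut_size card_sum_bool (pair_big xpredT xpredT (fun a b => ((a \in S) && (b \notin S) && e a b : nat))).
by apply: eq_bigl.
Qed.

Lemma cut_sum1 (V : finType) (e : rel V) (S : {set V}) :
  cut_size e S = \sum_(a in S) #|[set w | (w \notin S) && e a w]|.
Proof.
rewrite cut_pairs [RHS]big_mkcond /=; apply: eq_bigr => a _.
case: (boolP (a \in S)) => aS /=.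
  by rewrite card_sum_bool.
by rewrite big1.
Qed.

Lemma cut_sum2 (V : finType) (e : rel V) (S : {set V}) :
  cut_size e S = \sum_(b in ~: S) #|[set a | (a \in S) && e a b]|.
Proof.
rewrite cut_pairs exchange_big [RHS]big_mkcond /=; apply: eq_bigr => b _.
rewrite inE; case: (boolP (b \in S)) => bS /=.
  by rewrite big1 // => a _; rewrite andbF.
by rewrite card_sum_bool; apply: eq_bigr => a _; rewrite andbT.
Qed.

Lemma cut_compl (V : finType) (e : rel V) (S : {set V}) : symmetric e ->
  cut_size e (~: S) = cut_size e S.
Proof.
move=> es; rewrite !cut_pairs exchange_big; apply: eq_bigr => a _; apply: eq_bigr => b _.
by rewrite !inE negbK es; case: (a \in S); case: (b \in S).
Qed.

Lemma compl_sym (V : finType) (e : rel V) : symmetric e -> symmetric (compl_graph e).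
Proof. by move=> es u w; rewrite /compl_graph eq_sym es. Qed.

Lemma compl_irr (V : finType) (e : rel V) : irreflexive (compl_graph e).
Proof. by move=> u; rewrite /compl_graph eqxx. Qed.

Lemma S_big (V : finType) (e : rel V) (S : {set V}) : simple_graph e ->
  min_degree_ge e 4 -> S != set0 -> (cut_size e S <= 3)%N -> (5 <= #|S|)%N.
Proof.
move=> [es ei] hd hS hc.
have h : forall s, s \in S -> (4 <= #|S| - 1 + #|[set w | (w \notin S) && e s w]|)%N.
  move=> s sS; apply: leq_trans (hd s) _; rewrite /degree.
  rewrite -(cardsID S [set w | e s w]); apply: leq_add.
    have : [set w | e s w] :&: S \subset S :\ s.
      apply/subsetP => w; rewrite !inE => /andP[esw ->]; rewrite andbT.
      by apply: contraTneq esw => ->; rewrite ei.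
    move/subset_leq_card; rewrite (cardsD1 s S) sS; lia.
  by apply: subset_leq_card; apply/subsetP => w; rewrite !inE => /andP[-> ->].
have : (\sum_(s in S) 4 <= \sum_(s in S) (#|S| - 1 + #|[set w | (w \notin S) && e s w]|))%N.
  by apply: leq_sum.
rewrite big_split /= -cut_sum1 !sum_nat_const.
have : (0 < #|S|)%N by rewrite card_gt0.
move: hc; set c := cut_size e S; set k := #|S|; nia.
Qed.

Lemma core (V : finType) (e : rel V) (S : {set V}) : simple_graph e ->
  min_degree_ge e 4 -> min_degree_ge (compl_graph e) 4 -> S != set0 ->
  (cut_size e S <= 3)%N -> (13 <= #|~: S|)%N -> S3on (compl_graph e) setT.
Proof.
move=> sg hd hdc hS hc hT; have [es ei] := sg.
have S5 := S_big sg hd hS hc.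
pose H := compl_graph e.
have Hs : symmetric H := compl_sym es.
have Hi : irreflexive H := compl_irr e.
pose f t := #|[set a | (a \in S) && e a t]|.
have hcut : (\sum_(t in ~: S) f t <= 3)%N by rewrite -cut_sum2.
pose C := [set t in ~: S | f t == 0%N].
have CT : C \subset ~: S by apply/subsetP => t; rewrite inE => /andP[].
have clean t s : t \in C -> s \in S -> H s t.
  rewrite inE => /andP[tT /eqP f0] sS; rewrite /H /compl_graph.
  apply/andP; split; first by apply: contraTneq tT => <-; rewrite inE negbK.
  apply/negP => est; move: f0 => /eqP; rewrite cards_eq0 => /eqP/setP/(_ s).
  by rewrite !inE sS est.
have C10 : (10 <= #|C|)%N.
  have h3 : (#|~: S :\: C| <= 3)%N.
    apply: leq_trans hcut; rewrite (big_setID C) /=; apply: leq_trans (leq_addl _ _).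
    rewrite -sum1_card; apply: leq_sum => t; rewrite !inE => /andP[hn hT'].
    by rewrite lt0n; move: hn; rewrite hT'.
  have := cardsID C (~: S); rewrite (setIidPr CT); lia.
have [P [PS cP]] := subset_size S5.
have [Q [QC cQ]] := subset_size (leq_trans (isT : (7 <= 10)%N) C10).
have dPQ : [disjoint P & Q].
  rewrite -setI_eq0; apply/eqP/setP => x; rewrite !inE.
  apply/negP => /andP[/(subsetP PS) xS /(subsetP QC) /(subsetP CT)].
  by rewrite inE xS.
have hA0 : S3on H (P :|: Q).
  apply: (S3on_super _ Hs Hi (base_S3 dPQ cP cQ)).
    by rewrite /symmetric => u w; rewrite /eK; case: (u \in P); case: (u \in Q); case: (w \in P); case: (w \in Q).
  move=> u w _ _; rewrite /eK => /orP[/andP[uP wQ] | /andP[uQ wP]].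
    by apply: clean; [apply: (subsetP QC) | apply: (subsetP PS)].
  by rewrite Hs; apply: clean; [apply: (subsetP QC) | apply: (subsetP PS)].
have hA1 : S3on H (S :|: Q).
  apply: (S3on_grow Hs Hi hA0).
    by apply: setSU.
  move=> v; rewrite !inE => /orP[vS | vQ] hv; last by move: hv; rewrite vQ orbT.
  apply: leq_trans (_ : 7 <= _)%N; first by [].
  rewrite -cQ; apply: subset_leq_card; apply/subsetP => w wQ.
  by rewrite !inE wQ orbT /=; apply: clean (subsetP QC _ wQ) vS.
pose B := [set v | (v \in S) || (4 <= #|[set w in S | H v w]|)%N].
have hA2 : S3on H B.
  apply: (S3on_grow Hs Hi hA1).
    apply/subsetP => v; rewrite !inE => /orP[-> // | vQ]; apply/orP; right.
    apply: leq_trans (leq_trans (isT : (4 <= 5)%N) S5) _.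
    apply: subset_leq_card; apply/subsetP => w wS.
    by rewrite inE wS /= Hs; apply: clean (subsetP QC _ vQ) wS.
  move=> v; rewrite !inE => /orP[-> // | h] _; apply: leq_trans h _.
  apply: subset_leq_card; apply/subsetP => w; rewrite !inE => /andP[-> ->] //.
have bad v : v \notin B -> (2 <= f v)%N /\ v \in ~: S.
  rewrite inE negb_or => /andP[vS h4]; split; last by rewrite inE.
  have : #|[set w in S | H v w]| + f v = #|S|.
    rewrite -(cardsID [set w | e w v] S) addnC; congr (_ + _); apply: eq_card => w; rewrite !inE.
      by rewrite andbC.
    rewrite /H /compl_graph es; case: (boolP (w \in S)) => wS /=; last by rewrite andbF.
    by rewrite andbT (_ : v != w) //; apply: contraNneq vS => ->.
  by move: h4; rewrite -ltnNge; lia.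
have one v1 v2 : v1 \notin B -> v2 \notin B -> v1 = v2.
  move=> h1 h2; apply/eqP/negPn/negP => ne.
  have [f1 T1] := bad _ h1; have [f2 T2] := bad _ h2.
  move: hcut; rewrite (bigD1 v1) //= (bigD1 v2) /=; last by rewrite T2 eq_sym ne.
  lia.
case: (pickP (fun v => v \notin B)) => [t tB | none].
- have -> : setT = t |: B.
    apply/setP => x; rewrite in_setT in_setU1; case: (boolP (x \in B)) => xB; first by rewrite orbT.
    by rewrite (one _ _ xB tB) eqxx.
  apply: (S3on_add Hs Hi hA2 tB).
  apply: leq_trans (hdc t) _; rewrite /degree; apply: subset_leq_card.
  apply/subsetP => w; rewrite inE => hw; rewrite inE /H hw andbT.
  case: (boolP (w \in B)) => // wB; have := one _ _ wB tB => ewt.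
  by move: hw; rewrite ewt compl_irr.
- have -> : setT = B.
    by apply/setP => x; rewrite !inE; move: (none x) => /= /negbFE; rewrite inE.
  exact: hA2.
Qed.

End Part5.


Theorem mainTheorem15 (V : finType) (e : rel V) :
  simple_graph e ->
  min_degree_ge e 4 -> min_degree_ge (compl_graph e) 4 ->
  26 <= #|V| ->
  has_edge_cut_le e 3 ->
  in_S3 (compl_graph e).
Proof.
move=> sg hd hdc hV [S [hS0 hST hc]].
apply: S3on_full.
case: (leqP 13 #|~: S|) => h.
- exact: core sg hd hdc hS0 hc h.
- have es := sg.1.
  apply: (core (S := ~: S)) => //.
  + by apply: contra hST => /eqP h0; rewrite -[S]setCK h0 setC0.
  + by rewrite cut_compl.
  + rewrite setCK; have := cardsC S; lia.
Qed.
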